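(* Let $p$ be a prime, $D$ the quaternion algebra over $\mathbb{Q}$ ramified exactly at $\{p,\infty\}$, and $\mathcal{O}$ a maximal order. Suppose $\lambda,\mu\in\mathcal{O}$ satisfy $N(\lambda)=p-1$, $N(\mu)=p$ and $\mathrm{tr}(r)=0$, where $r=\lambda\overline{\mu}$. Put \[g_{\lambda,\mu}=\begin{pmatrix}1&\lambda\\0&\mu\end{pmatrix},\qquad P_{\lambda,\mu}=\begin{pmatrix}1&\overline{r}/p\\0&1\end{pmatrix}.\] Then $g_{\lambda,\mu}$ is a valid choice of $g$, i.e. the left $\mathcal{O}$-lattice $\mathcal{O}^2g_{\lambda,\mu}$ lies in the non-principal genus, and $P_{\lambda,\mu}$ is a valid choice of $P$, i.e. with $A=g_{\lambda,\mu}\overline{g_{\lambda,\mu}}^T$ the matrix $P_{\lambda,\mu}A\overline{P_{\lambda,\mu}}^T$ is diagonal. Moreover $P_{\lambda,\mu}^{-1}=\overline{P_{\lambda,\mu}}$.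
   Context: $x\mapsto\overline{x}$ is quaternion conjugation, $N(x)=x\overline{x}$ the reduced norm, $\mathrm{tr}(x)=x+\overline{x}$ the reduced trace. For a matrix $M$ over $D$, $\overline{M}$ is the entrywise conjugate and $\overline{M}^T$ its transpose. $\mathrm{GU}_2(D_p)=\{h\in M_2(D_p):h\overline{h}^T=\mu(h)I,\ \mu(h)\in\mathbb{Q}_p^\times\}$ where $D_p=D\otimes\mathbb{Q}_p$, $\mathcal{O}_p=\mathcal{O}\otimes\mathbb{Z}_p$. A left $\mathcal{O}$-lattice $L\subset D^2$ (row vectors) lies in the non-principal genus if $L\otimes\mathbb{Z}_p$ is not of the form $\mathcal{O}_p^2h$ with $h\in\mathrm{GU}_2(D_p)$. *)

(* Defs.v *)
From HB Require Import structures.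
From mathcomp Require Import all_boot all_order all_algebra.
From mathcomp Require Import Rstruct.
Set Implicit Arguments. Unset Strict Implicit. Unset Printing Implicit Defensive.
Import Order.TTheory GRing.Theory Num.Theory.
Local Open Scope ring_scope.

(* Quaternion algebras (a,b)_R : basis 1,i,j,k with i^2=a, j^2=b,       *)
(* k=ij=-ji, over a commutative ring R.  Elements are coordinate       *)
(* 4-tuples.                                                           *)
Record quat (R : Type) := Quat { q0 : R; q1 : R; q2 : R; q3 : R }.

Section QuatOps.
Variable R : comNzRingType.

Definition qscal (c : R) : quat R := Quat c 0 0 0.
Definition qadd (x y : quat R) : quat R :=
  Quat (q0 x + q0 y) (q1 x + q1 y) (q2 x + q2 y) (q3 x + q3 y).
Definition qopp (x : quat R) : quat R := Quat (- q0 x) (- q1 x) (- q2 x) (- q3 x).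
Definition qsub (x y : quat R) : quat R := qadd x (qopp y).
Definition qscale (c : R) (x : quat R) : quat R :=
  Quat (c * q0 x) (c * q1 x) (c * q2 x) (c * q3 x).
Definition qconj (x : quat R) : quat R := Quat (q0 x) (- q1 x) (- q2 x) (- q3 x).
Definition qmul (a b : R) (x y : quat R) : quat R :=
  Quat (q0 x * q0 y + a * q1 x * q1 y + b * q2 x * q2 y - a * b * q3 x * q3 y)
       (q0 x * q1 y + q1 x * q0 y - b * q2 x * q3 y + b * q3 x * q2 y)
       (q0 x * q2 y + q2 x * q0 y + a * q1 x * q3 y - a * q3 x * q1 y)
       (q0 x * q3 y + q3 x * q0 y + q1 x * q2 y - q2 x * q1 y).

Definition qsumk (k : nat) (f : nat -> quat R) : quat R :=
  foldr (fun i acc => qadd (f i) acc) (qscal 0) (iota 0 k).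

Record mat2 := M2 { e11 : quat R; e12 : quat R; e21 : quat R; e22 : quat R }.

Definition mmul (a b : R) (A B : mat2) : mat2 :=
  M2 (qadd (qmul a b (e11 A) (e11 B)) (qmul a b (e12 A) (e21 B)))
     (qadd (qmul a b (e11 A) (e12 B)) (qmul a b (e12 A) (e22 B)))
     (qadd (qmul a b (e21 A) (e11 B)) (qmul a b (e22 A) (e21 B)))
     (qadd (qmul a b (e21 A) (e12 B)) (qmul a b (e22 A) (e22 B))).
Definition mconj (A : mat2) : mat2 :=
  M2 (qconj (e11 A)) (qconj (e12 A)) (qconj (e21 A)) (qconj (e22 A)).
Definition mtr (A : mat2) : mat2 := M2 (e11 A) (e21 A) (e12 A) (e22 A).
Definition mconjT (A : mat2) : mat2 := mtr (mconj A).
Definition mscal (c : R) : mat2 := M2 (qscal c) (qscal 0) (qscal 0) (qscal c).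
Definition vmul (a b : R) (v : quat R * quat R) (A : mat2) : quat R * quat R :=
  (qadd (qmul a b v.1 (e11 A)) (qmul a b v.2 (e21 A)),
   qadd (qmul a b v.1 (e12 A)) (qmul a b v.2 (e22 A))).
End QuatOps.

Arguments mat2 : clear implicits.

(* The rational quaternion algebra D = (a,b)_Q with a, b in Z.         *)
Definition Dmul (a b : int) := @qmul rat a%:~R b%:~R.
Definition Dmmul (a b : int) := @mmul rat a%:~R b%:~R.
Definition Dvmul (a b : int) := @vmul rat a%:~R b%:~R.

Definition qlin (c : seq int) (s : seq (quat rat)) : quat rat :=
  foldr (fun cs acc => qadd (qscale (cs.1)%:~R cs.2) acc) (qscal 0) (zip c s).

(* An order of D: a subring (containing 1, closed under - and * ) that is *)
(* a lattice, i.e. a finitely generated Z-module spanning D over Q.      *)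
Definition is_order (a b : int) (O : quat rat -> Prop) : Prop :=
  [/\ O (qscal 1),
      (forall x y, O x -> O y -> O (qsub x y)),
      (forall x y, O x -> O y -> O (Dmul a b x y)),
      (exists s : seq (quat rat),
          forall x, O x <-> exists c : seq int, size c = size s /\ x = qlin c s)
    & (forall x, exists n : nat, (0 < n)%N /\ O (qscale n%:R x))].

Definition is_maximal_order (a b : int) (O : quat rat -> Prop) : Prop :=
  is_order a b O /\
  forall O', is_order a b O' -> (forall x, O x -> O' x) -> (forall x, O' x -> O x).

(* l-adic completions, built as completions of Q (resp. D) w.r.t. the   *)
(* l-adic absolute value (on coordinates in the basis 1,i,j,k).         *)
(* r lies in l^n Z_(l)  (i.e. r = 0 or v_l(r) >= n) *)
Definition in_pZ (l n : nat) (r : rat) : Prop :=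
  exists (m : int) (d : nat), ~~ (l %| d)%N /\ r * d%:R = (l ^ n)%:R * m%:~R.

Definition rcauchy (l : nat) (c : nat -> rat) : Prop :=
  forall N, exists M, forall m n, (M <= m)%N -> (M <= n)%N -> in_pZ l N (c m - c n).
Definition rnull (l : nat) (c : nat -> rat) : Prop :=
  forall N, exists M, forall n, (M <= n)%N -> in_pZ l N (c n).

(* elements of Z_l : Cauchy sequences of l-integral rationals *)
Definition isZl (l : nat) (c : nat -> rat) : Prop :=
  rcauchy l c /\ forall n, in_pZ l 0 (c n).
(* elements of Q_l^x : non-null Cauchy sequences *)
Definition isQlunit (l : nat) (c : nat -> rat) : Prop :=
  rcauchy l c /\ ~ rnull l c.

(* elements of D_l = D (x) Q_l : Cauchy sequences in D *)
Definition qcauchy (l : nat) (X : nat -> quat rat) : Prop :=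
  [/\ rcauchy l (fun n => q0 (X n)), rcauchy l (fun n => q1 (X n)),
      rcauchy l (fun n => q2 (X n)) & rcauchy l (fun n => q3 (X n))].
Definition qnull (l : nat) (X : nat -> quat rat) : Prop :=
  [/\ rnull l (fun n => q0 (X n)), rnull l (fun n => q1 (X n)),
      rnull l (fun n => q2 (X n)) & rnull l (fun n => q3 (X n))].
(* equality in D_l *)
Definition qequiv (l : nat) (X Y : nat -> quat rat) : Prop :=
  qnull l (fun n => qsub (X n) (Y n)).

(* D ramified at the prime l : D (x) Q_l is a division algebra *)
Definition ramified_at (a b : int) (l : nat) : Prop :=
  forall X Y : nat -> quat rat, qcauchy l X -> qcauchy l Y ->
    ~ qnull l X -> ~ qnull l Y -> ~ qnull l (fun n => Dmul a b (X n) (Y n)).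

(* D ramified at infinity : D (x) R is a division algebra *)
Definition ramified_at_infty (a b : int) : Prop :=
  forall x y : quat Rdefinitions.R, x <> qscal 0 -> y <> qscal 0 ->
    qmul a%:~R b%:~R x y <> qscal 0.

Definition ramified_exactly_at_p_infty (a b : int) (p : nat) : Prop :=
  ramified_at_infty a b /\ forall l, prime l -> (ramified_at a b l <-> l = p).

Definition vcauchy l (V : nat -> quat rat * quat rat) :=
  qcauchy l (fun n => (V n).1) /\ qcauchy l (fun n => (V n).2).
Definition vequiv l (V W : nat -> quat rat * quat rat) :=
  qequiv l (fun n => (V n).1) (fun n => (W n).1) /\
  qequiv l (fun n => (V n).2) (fun n => (W n).2).
Definition mcauchy l (H : nat -> mat2 rat) :=
  [/\ qcauchy l (fun n => e11 (H n)), qcauchy l (fun n => e12 (H n)),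
      qcauchy l (fun n => e21 (H n)) & qcauchy l (fun n => e22 (H n))].
Definition mequiv l (H K : nat -> mat2 rat) :=
  [/\ qequiv l (fun n => e11 (H n)) (fun n => e11 (K n)),
      qequiv l (fun n => e12 (H n)) (fun n => e12 (K n)),
      qequiv l (fun n => e21 (H n)) (fun n => e21 (K n))
    & qequiv l (fun n => e22 (H n)) (fun n => e22 (K n))].

(* X is in O_l = O (x) Z_l  (Z_l-span of O inside D_l) *)
Definition in_Ol (l : nat) (O : quat rat -> Prop) (X : nat -> quat rat) : Prop :=
  exists (k : nat) (c : nat -> nat -> rat) (w : nat -> quat rat),
    (forall i, (i < k)%N -> isZl l (c i) /\ O (w i)) /\
    qequiv l X (fun n => qsumk k (fun i => qscale (c i n) (w i))).

(* V is in L (x) Z_l  (Z_l-span of L inside D_l^2) *)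
Definition in_Ll (l : nat) (L : quat rat * quat rat -> Prop)
    (V : nat -> quat rat * quat rat) : Prop :=
  exists (k : nat) (c : nat -> nat -> rat) (w : nat -> quat rat * quat rat),
    (forall i, (i < k)%N -> isZl l (c i) /\ L (w i)) /\
    vequiv l V (fun n => (qsumk k (fun i => qscale (c i n) (w i).1),
                          qsumk k (fun i => qscale (c i n) (w i).2))).

Definition in_Ol2h (a b : int) (l : nat) (O : quat rat -> Prop)
    (h : nat -> mat2 rat) (V : nat -> quat rat * quat rat) : Prop :=
  exists X Y : nat -> quat rat, in_Ol l O X /\ in_Ol l O Y /\
    vequiv l V (fun n => Dvmul a b (X n, Y n) (h n)).

Definition in_GU2 (a b : int) (l : nat) (h : nat -> mat2 rat) : Prop :=
  mcauchy l h /\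
  exists mu : nat -> rat, isQlunit l mu /\
    mequiv l (fun n => Dmmul a b (h n) (mconjT (h n))) (fun n => mscal (mu n)).

Definition nonprincipal_genus (a b : int) (p : nat) (O : quat rat -> Prop)
    (L : quat rat * quat rat -> Prop) : Prop :=
  ~ exists h : nat -> mat2 rat, in_GU2 a b p h /\
      forall V, vcauchy p V -> (in_Ll p L V <-> in_Ol2h a b p O h V).

Definition O2g (a b : int) (O : quat rat -> Prop) (g : mat2 rat)
    (v : quat rat * quat rat) : Prop :=
  exists x y, O x /\ O y /\ v = Dvmul a b (x, y) g.

Definition is_diag (A : mat2 rat) : Prop := e12 A = qscal 0 /\ e21 A = qscal 0.

(* Main.v *)
Require Import Defs.
From HB Require Import structures.
From mathcomp Require Import all_boot all_order all_algebra.
From mathcomp Require Import ring zify.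
From Stdlib Require Import Classical.
Import Order.TTheory GRing.Theory Num.Theory.
Local Open Scope ring_scope.

Module B.
Import Order.TTheory GRing.Theory Num.Theory.
Local Open Scope ring_scope.
Set Implicit Arguments. Unset Strict Implicit. Unset Printing Implicit Defensive.

Section Padic.
Variable p : nat.
Hypothesis pp : prime p.

Lemma p_gt1 : (1 < p)%N. Proof. exact: prime_gt1. Qed.
Lemma p_gt0 : (0 < p)%N. Proof. exact: prime_gt0. Qed.
Lemma pR0 : (p%:R : rat) != 0. Proof. by rewrite pnatr_eq0 -lt0n p_gt0. Qed.
Lemma pXR0 n : ((p ^ n)%:R : rat) != 0.
Proof using pp. by rewrite pnatr_eq0 -lt0n expn_gt0 p_gt0. Qed.

Lemma rat_to_int x (m : int) (d K : nat) :
  x * d%:R = K%:R * m%:~R -> numq x * d%:Z = K%:Z * m * denq x.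
Proof using pp.
move=> h; apply: (@intr_inj rat).
rewrite !intrM numqE.
transitivity ((x * d%:R) * (denq x)%:~R); first by ring.
rewrite h; ring.
Qed.

Lemma pint_den x : in_pZ p 0 x -> ~~ (p %| `|denq x|)%N.
Proof using pp.
case=> m [d [nd h]]; rewrite expn0 in h.
have e := rat_to_int h; apply/negP => pd.
have : (p %| absz (numq x * d%:Z)%R)%N.
  by rewrite e !abszM dvdn_mull.
rewrite abszM /= Gauss_dvdl ?prime_coprime // => pn.
have := coprime_num_den x; rewrite /coprime => /eqP g.
have : (p %| gcdn `|numq x| `|denq x|)%N by rewrite dvdn_gcd pn pd.
by rewrite g dvdn1; move/eqP=> p1; move: (p_gt1); rewrite p1.
Qed.

Lemma den_pint x : ~~ (p %| `|denq x|)%N -> in_pZ p 0 x.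
Proof using pp.
move=> h; exists (numq x), `|denq x|%N; split => //.
rewrite expn0 mul1r numqE; congr (_ * _).
by rewrite -[in RHS](@gez0_abs (denq x)) ?ltW ?denq_gt0.
Qed.

Lemma pZ_scale n x : in_pZ p n x <-> exists y, in_pZ p 0 y /\ x = (p ^ n)%:R * y.
Proof using pp.
split.
  case=> m [d [nd h]]; exists (x / (p ^ n)%:R); split; last first.
    by rewrite mulrC divfK ?pXR0.
  exists m, d; split => //; rewrite expn0 mul1r mulrAC h mulrAC mulfV ?pXR0 ?mul1r //.
case=> y [[m [d [nd h]]] ->]; exists m, d; split => //.
by rewrite -mulrA h expn0 mul1r.
Qed.

Lemma pZ0 n : in_pZ p n 0.
Proof using pp. exists 0, 1%N; split; first by rewrite dvdn1 -(eqn_add2r 0) addn0; apply/eqP; move: p_gt1; case: p => [|[]]. 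
by rewrite !mul0r mulr0. Qed.

Lemma pZ_int (z : int) : in_pZ p 0 z%:~R.
Proof using pp.
exists z, 1%N; split; first by rewrite dvdn1; apply/eqP => p1; move: p_gt1; rewrite p1.
by rewrite mulr1 expn0 mul1r.
Qed.

Lemma pZ_nat (k : nat) : in_pZ p 0 k%:R.
Proof using pp. exact: (pZ_int k%:Z). Qed.

Lemma pZ_add n x y : in_pZ p n x -> in_pZ p n y -> in_pZ p n (x + y).
Proof using pp.
case=> m1 [d1 [n1 h1]] [m2 [d2 [n2 h2]]].
exists (m1 * d2%:Z + m2 * d1%:Z), (d1 * d2)%N; split.
  by rewrite Euclid_dvdM // negb_or n1 n2.
have -> : (x + y) * (d1 * d2)%:R = (x * d1%:R) * d2%:R + (y * d2%:R) * d1%:R.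
  by rewrite natrM; ring.
rewrite h1 h2; ring.
Qed.

Lemma pZ_opp n x : in_pZ p n x -> in_pZ p n (- x).
Proof using pp. case=> m [d [nd h]]; exists (- m), d; split => //. rewrite mulNr h; ring. Qed.

Lemma pZ_sub n x y : in_pZ p n x -> in_pZ p n y -> in_pZ p n (x - y).
Proof using pp. by move=> hx hy; apply: pZ_add => //; apply: pZ_opp. Qed.

Lemma pZ_mul n k x y : in_pZ p n x -> in_pZ p k y -> in_pZ p (n + k) (x * y).
Proof using pp.
case=> m1 [d1 [n1 h1]] [m2 [d2 [n2 h2]]].
exists (m1 * m2), (d1 * d2)%N; split.
  by rewrite Euclid_dvdM // negb_or n1 n2.
have -> : (x * y) * (d1 * d2)%:R = (x * d1%:R) * (y * d2%:R) by rewrite natrM; ring.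
by rewrite h1 h2 expnD natrM; ring.
Qed.

Lemma pZ_mul0 n x y : in_pZ p 0 x -> in_pZ p n y -> in_pZ p n (x * y).
Proof using pp. by move=> hx hy; have := pZ_mul hx hy; rewrite add0n. Qed.

Lemma pZ_mul0r n x y : in_pZ p n x -> in_pZ p 0 y -> in_pZ p n (x * y).
Proof using pp. by move=> hx hy; have := pZ_mul hx hy; rewrite addn0. Qed.

Lemma pZ_le k n x : (k <= n)%N -> in_pZ p n x -> in_pZ p k x.
Proof using pp.
move=> kn [m [d [nd h]]]; exists ((p ^ (n - k))%:Z * m), d; split => //.
rewrite h.
have -> : (p ^ n = p ^ k * p ^ (n - k))%N by rewrite -expnD subnKC.
rewrite natrM intrM; have -> : ((p ^ (n - k))%:Z)%:~R = ((p ^ (n - k))%:R : rat) by [].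
ring.
Qed.

Lemma pZ_p : in_pZ p 1 p%:R.
Proof using pp. by apply/pZ_scale; exists 1; split; [exact: (pZ_nat 1) | rewrite expn1 mulr1]. Qed.

Lemma pZ_pX n : in_pZ p n (p ^ n)%:R.
Proof using pp. by apply/pZ_scale; exists 1; split; [exact: (pZ_nat 1) | rewrite mulr1]. Qed.

Lemma pZ_div n k x : in_pZ p (n + k) ((p ^ k)%:R * x) -> in_pZ p n x.
Proof using pp.
move/pZ_scale=> [y [hy e]]; apply/pZ_scale; exists y; split => //.
apply: (mulfI (pXR0 k)); rewrite e expnD natrM; ring.
Qed.

Lemma pZ_invnat (d : nat) : ~~ (p %| d)%N -> in_pZ p 0 (d%:R^-1).
Proof using pp.
move=> nd; exists 1, d; split => //; rewrite mulVf ?expn0 ?mulr1 //.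
by rewrite pnatr_eq0; apply/eqP => d0; move: nd; rewrite d0 dvdn0.
Qed.

Lemma pZ_inv x : in_pZ p 0 x -> ~ in_pZ p 1 x -> x != 0 /\ in_pZ p 0 x^-1.
Proof using pp.
case=> m [d [nd h]] np.
have x0 : x != 0 by apply/eqP => x0; apply: np; rewrite x0; apply: pZ0.
split => //.
have m0 : ~~ (p %| `|m|)%N.
  apply/negP => /dvdnP [k ek]; apply: np; exists ((sgz m) * k%:Z), d; split => //.
  rewrite h expn0 expn1 mul1r {1}[m]intEsg ek; ring.
exists ((sgz m) * d%:Z), `|m|%N; split => //.
have -> : (`|m|%:R : rat) = (sgz m)%:~R * m%:~R.
  by rewrite -intrM -abszEsg.
have -> : x^-1 * ((sgz m)%:~R * m%:~R) = (sgz m)%:~R * (m%:~R / x) by ring.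
have -> : (m%:~R / x) = d%:R.
  by rewrite expn0 mul1r in h; rewrite -h mulrAC mulfV ?mul1r.
by rewrite expn0 mul1r intrM.
Qed.

Lemma pZ_zero_all x : (forall N, in_pZ p N x) -> x = 0.
Proof using pp.
move=> h; apply/eqP/negPn/negP => x0.
have nq : numq x != 0 by rewrite numq_eq0.
case: (h `|numq x|%N) => m [d [nd e]].
have ei := rat_to_int e.
have : (p ^ `|numq x| %| absz (numq x * d%:Z)%R)%N by rewrite ei !abszM /= -mulnA dvdn_mulr.
rewrite abszM /= Gauss_dvdl; last by rewrite coprimeXl // prime_coprime.
move/(dvdn_leq); rewrite absz_gt0 nq => /(_ isT) hle.
by have := ltn_expl `|numq x| p_gt1; rewrite ltnNge hle.
Qed.

Lemma pZ_bnd x : exists K, in_pZ p 0 ((p ^ K)%:R * x).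
Proof using pp.
have dp : (0 < `|denq x|)%N by rewrite absz_gt0 denq_neq0.
case: (pfactor_coprime pp dp) => m cm em.
exists (logn p `|denq x|), (numq x), m; split; first by rewrite -prime_coprime.
rewrite expn0 mul1r numqE.
have -> : ((denq x)%:~R : rat) = ((m * p ^ logn p `|denq x|)%:R : rat).
  by rewrite -em -[denq x]gez0_abs ?ltW ?denq_gt0 // abszE.
rewrite natrM; ring.
Qed.

Lemma pZ_powbnd J x : (forall k, in_pZ p 0 ((p ^ J)%:R * x ^+ k)) -> in_pZ p 0 x.
Proof using pp.
move=> h; apply: den_pint; apply/negP => pd.
case: (h J.+1) => m [d [nd e]].
rewrite expn0 mul1r in e.
have ex : x = (numq x)%:~R / (denq x)%:~R by rewrite divq_num_den.
have e2 : ((p ^ J)%:Z * numq x ^+ J.+1 * d%:Z) = m * denq x ^+ J.+1.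
  apply: (@intr_inj rat); rewrite !rmorphM !rmorphXn /= numqE.
  rewrite exprMn.
  have -> : (p%:~R : rat) ^+ J = (p ^ J)%:R by rewrite natrX.
  rewrite -e; set u := x ^+ _; set v := _ ^+ _; rewrite /=; ring.
have : (p ^ J.+1 %| absz ((p ^ J)%:Z * numq x ^+ J.+1 * d%:Z)%R)%N.
  by rewrite e2 abszM abszX dvdn_mull // dvdn_exp2r.
rewrite !abszM abszX /= expnS [(p * _)%N]mulnC -!mulnA dvdn_pmul2l ?expn_gt0 ?p_gt0 //.
rewrite Euclid_dvdM // (negbTE nd) orbF Euclid_dvdX // andbT => pn.
have := coprime_num_den x; rewrite /coprime => /eqP g.
have : (p %| gcdn `|numq x| `|denq x|)%N by rewrite dvdn_gcd pn pd.
by rewrite g dvdn1; move/eqP=> p1; move: (p_gt1); rewrite p1.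
Qed.

Lemma pZ_sq x : in_pZ p 1 (x * x) -> in_pZ p 1 x.
Proof using pp.
case=> m [d [nd e]].
have ex : x = (numq x)%:~R / (denq x)%:~R by rewrite divq_num_den.
have dd : ((denq x)%:~R : rat) != 0 by rewrite intr_eq0 denq_neq0.
have e2 : numq x * numq x * d%:Z = p%:Z * m * (denq x * denq x).
  apply: (@intr_inj rat); rewrite !intrM.
  move: e; rewrite {1 2}ex expn1 => e.
  have -> : ((p%:Z)%:~R : rat) = p%:R by [].
  have -> : ((d%:Z)%:~R : rat) = d%:R by [].
  rewrite -e; field; done.
have : (p %| absz (numq x * numq x * d%:Z)%R)%N by rewrite e2 !abszM /= -mulnA dvdn_mulr.
rewrite !abszM /= !Euclid_dvdM // (negbTE nd) orbF orbb => pn.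
have pd : ~~ (p %| `|denq x|)%N.
  apply/negP => pd; have := coprime_num_den x; rewrite /coprime => /eqP g.
  have : (p %| gcdn `|numq x| `|denq x|)%N by rewrite dvdn_gcd pn pd.
  by rewrite g dvdn1; move/eqP=> p1; move: (p_gt1); rewrite p1.
case/dvdnP: pn => k ek.
exists ((sgz (numq x)) * k%:Z), `|denq x|%N; split => //.
have hd : ((denq x)%:~R : rat) = (`|denq x|%:R).
  by rewrite -[in LHS](@gez0_abs (denq x)) ?ltW ?denq_gt0.
rewrite -hd -numqE {1}[numq x]intEsg ek expn1; ring.
Qed.

Lemma pZ_pm1 : ~ in_pZ p 1 (p%:R - 1).
Proof using pp.
case=> m [d [nd e]].
have e2 : (p.-1 * d)%N%:Z = p%:Z * m.
  rewrite expn1 in e; apply: (@intr_inj rat); rewrite intrM.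
  have -> : ((p%:Z)%:~R : rat) = p%:R by [].
  rewrite -e.
  have -> : (((p.-1 * d)%N%:Z)%:~R : rat) = (p.-1)%:R * d%:R by rewrite -natrM.
  rewrite -[in RHS](prednK p_gt0) -addn1 natrD; ring.
have : (p %| p.-1 * d)%N.
  have : (p %| absz ((p.-1 * d)%N%:Z)%R)%N by rewrite e2 abszM dvdn_mulr.
  by [].
rewrite Gauss_dvdr; first by rewrite (negbTE nd).
by rewrite -(prednK p_gt0) coprimeSn.
Qed.

End Padic.

End B.
Import B.

Module C.
Import Order.TTheory GRing.Theory Num.Theory.
Local Open Scope ring_scope.
Set Implicit Arguments. Unset Strict Implicit. Unset Printing Implicit Defensive.

Lemma quatE (R : Type) (x y : quat R) :
  q0 x = q0 y -> q1 x = q1 y -> q2 x = q2 y -> q3 x = q3 y -> x = y.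
Proof. by case: x; case: y => /= ????????; do 4! move=> ->. Qed.

Ltac qunf := rewrite /Dmul /Dmmul /Dvmul /mmul /vmul /mconjT /mtr /mconj /mscal
   /qmul /qadd /qsub /qopp /qconj /qscal /qscale /=.
Ltac qring := apply: quatE; qunf; ring.

Definition qall (P : rat -> Prop) (x : quat rat) :=
  [/\ P (q0 x), P (q1 x), P (q2 x) & P (q3 x)].

Section QP.
Variable p : nat.
Hypothesis pp : prime p.
Local Notation p_gt1 := (@p_gt1 p pp).
Local Notation p_gt0 := (@p_gt0 p pp).
Local Notation pR0 := (@pR0 p pp).
Local Notation pXR0 := (@pXR0 p pp).
Local Notation rat_to_int := (@rat_to_int p pp).
Local Notation pint_den := (@pint_den p pp).
Local Notation den_pint := (@den_pint p pp).
Local Notation pZ_scale := (@pZ_scale p pp).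
Local Notation pZ0 := (@pZ0 p pp).
Local Notation pZ_int := (@pZ_int p pp).
Local Notation pZ_nat := (@pZ_nat p pp).
Local Notation pZ_add := (@pZ_add p pp).
Local Notation pZ_opp := (@pZ_opp p pp).
Local Notation pZ_sub := (@pZ_sub p pp).
Local Notation pZ_mul := (@pZ_mul p pp).
Local Notation pZ_mul0 := (@pZ_mul0 p pp).
Local Notation pZ_mul0r := (@pZ_mul0r p pp).
Local Notation pZ_le := (@pZ_le p pp).
Local Notation pZ_p := (@pZ_p p pp).
Local Notation pZ_pX := (@pZ_pX p pp).
Local Notation pZ_div := (@pZ_div p pp).
Local Notation pZ_invnat := (@pZ_invnat p pp).
Local Notation pZ_inv := (@pZ_inv p pp).
Local Notation pZ_zero_all := (@pZ_zero_all p pp).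
Local Notation pZ_bnd := (@pZ_bnd p pp).
Local Notation pZ_powbnd := (@pZ_powbnd p pp).
Local Notation pZ_sq := (@pZ_sq p pp).
Local Notation pZ_pm1 := (@pZ_pm1 p pp).
Variables a b : int.
Local Notation A := (a%:~R : rat).
Local Notation B := (b%:~R : rat).
Local Notation qm := (qmul A B).

Definition bnd K x := in_pZ p 0 ((p ^ K)%:R * x).
Definition qsm N := qall (in_pZ p N).
Definition qbd K := qall (bnd K).

Lemma bnd_add K x y : bnd K x -> bnd K y -> bnd K (x + y).
Proof using pp. by move=> h1 h2; rewrite /bnd mulrDr; apply: pZ_add. Qed.
Lemma bnd_opp K x : bnd K x -> bnd K (- x).
Proof using pp. by move=> h; rewrite /bnd mulrN; apply: pZ_opp. Qed.
Lemma bnd_int K (z : int) x : bnd K x -> bnd K (z%:~R * x).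
Proof using pp. by move=> h; rewrite /bnd mulrCA; apply: pZ_mul0 => //; apply: pZ_int. Qed.
Lemma bnd_mul K1 K2 x y : bnd K1 x -> bnd K2 y -> bnd (K1 + K2) (x * y).
Proof using pp.
move=> h1 h2; have := pZ_mul h1 h2; rewrite /bnd expnD natrM add0n.
by have -> : (p ^ K1)%:R * (p ^ K2)%:R * (x * y) = (p ^ K1)%:R * x * ((p ^ K2)%:R * y) by ring.
Qed.
Lemma bnd_mono K K' x : (K <= K')%N -> bnd K x -> bnd K' x.
Proof using pp.
move=> le h; rewrite /bnd -[K'](subnK le) expnD natrM -mulrA.
by apply: pZ_mul0 => //; apply: pZ_nat.
Qed.
Lemma bnd_pZ K N x : in_pZ p N x -> bnd K x.
Proof using pp.
move=> h; rewrite /bnd; apply: pZ_mul0; first exact: pZ_nat.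
by apply: pZ_le h.
Qed.
Lemma sm_mul K N x y : bnd K x -> in_pZ p (N + K) y -> in_pZ p N (x * y).
Proof using pp.
move=> h1 h2; apply: (@pZ_div N K); have := pZ_mul h1 h2.
by rewrite add0n mulrA.
Qed.
Lemma bnd0 K : bnd K 0. Proof. by rewrite /bnd mulr0; apply: pZ0. Qed.
Lemma bnd_const x : exists K, bnd K x.
Proof using pp. exact: pZ_bnd. Qed.

Lemma qmul_gen (P1 P2 P3 : rat -> Prop) x y :
  (forall u v, P3 u -> P3 v -> P3 (u + v)) -> (forall u, P3 u -> P3 (- u)) ->
  (forall (z : int) u, P3 u -> P3 (z%:~R * u)) ->
  (forall u v, P1 u -> P2 v -> P3 (u * v)) ->
  qall P1 x -> qall P2 y -> qall P3 (qm x y).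
Proof using pp.
move=> cD cN cZ cM [h0 h1 h2 h3] [k0 k1 k2 k3]; rewrite /qall /qmul /=.
have cB : forall u v, P3 u -> P3 v -> P3 (u - v) by move=> u v hu hv; apply: cD => //; apply: cN.
rewrite -!mulrA; split;
repeat first [ apply cD | apply cN | apply cZ | apply cM ]; by [].
Qed.

Lemma qall_add (P : rat -> Prop) x y : (forall u v, P u -> P v -> P (u + v)) ->
  qall P x -> qall P y -> qall P (qadd x y).
Proof using pp. by move=> cD [????] [????]; split; apply: cD. Qed.
Lemma qall_opp (P : rat -> Prop) x : (forall u, P u -> P (- u)) ->
  qall P x -> qall P (qopp x).
Proof using pp. by move=> cN [????]; split; apply: cN. Qed.
Lemma qall_conj (P : rat -> Prop) x : (forall u, P u -> P (- u)) ->
  qall P x -> qall P (qconj x).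
Proof using pp. by move=> cN [????]; split => //; apply: cN. Qed.

Lemma qsm_add N x y : qsm N x -> qsm N y -> qsm N (qadd x y).
Proof using pp. by apply: qall_add => u v; apply: pZ_add. Qed.
Lemma qsm_opp N x : qsm N x -> qsm N (qopp x).
Proof using pp. by apply: qall_opp => u; apply: pZ_opp. Qed.
Lemma qsm_sub N x y : qsm N x -> qsm N y -> qsm N (qsub x y).
Proof using pp. by move=> h1 h2; apply: qsm_add => //; apply: qsm_opp. Qed.
Lemma qsm_conj N x : qsm N x -> qsm N (qconj x).
Proof using pp. by apply: qall_conj => u; apply: pZ_opp. Qed.
Lemma qbd_add K x y : qbd K x -> qbd K y -> qbd K (qadd x y).
Proof using pp. by apply: qall_add => u v; apply: bnd_add. Qed.
Lemma qbd_opp K x : qbd K x -> qbd K (qopp x).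
Proof using pp. by apply: qall_opp => u; apply: bnd_opp. Qed.
Lemma qbd_sub K x y : qbd K x -> qbd K y -> qbd K (qsub x y).
Proof using pp. by move=> h1 h2; apply: qbd_add => //; apply: qbd_opp. Qed.
Lemma qbd_conj K x : qbd K x -> qbd K (qconj x).
Proof using pp. by apply: qall_conj => u; apply: bnd_opp. Qed.
Lemma qbd_mono K K' x : (K <= K')%N -> qbd K x -> qbd K' x.
Proof using pp. by move=> le [????]; split; apply: bnd_mono le _. Qed.
Lemma qbd_sm K N x : qsm N x -> qbd K x.
Proof using pp. by case=> ????; split; apply: bnd_pZ; eassumption. Qed.
Lemma qbd_scal K c : bnd K c -> qbd K (qscal c).
Proof using pp. by move=> h; split => //; apply: bnd0. Qed.
Lemma qsm_scal N c : in_pZ p N c -> qsm N (qscal c).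
Proof using pp. by move=> h; split => //; apply: pZ0. Qed.
Lemma qbd_const x : exists K, qbd K x.
Proof using pp.
case: (bnd_const (q0 x)) => K0 h0; case: (bnd_const (q1 x)) => K1 h1.
case: (bnd_const (q2 x)) => K2 h2; case: (bnd_const (q3 x)) => K3 h3.
exists (K0 + K1 + K2 + K3)%N; split; apply: bnd_mono; try eassumption; lia.
Qed.

Lemma qbd_mul K1 K2 x y : qbd K1 x -> qbd K2 y -> qbd (K1 + K2) (qm x y).
Proof using pp.
apply: qmul_gen; [exact: bnd_add | exact: bnd_opp | exact: bnd_int | exact: bnd_mul].
Qed.
Lemma qsm_mull K N x y : qbd K x -> qsm (N + K) y -> qsm N (qm x y).
Proof using pp.
apply: qmul_gen; [exact: pZ_add | exact: pZ_opp | | exact: sm_mul].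
by move=> z u h; apply: pZ_mul0 => //; apply: pZ_int.
Qed.
Lemma qsm_mulr K N x y : qsm (N + K) x -> qbd K y -> qsm N (qm x y).
Proof using pp.
apply: qmul_gen; [exact: pZ_add | exact: pZ_opp | | ].
  by move=> z u h; apply: pZ_mul0 => //; apply: pZ_int.
by move=> u v h1 h2; rewrite mulrC; apply: sm_mul h1.
Qed.

Lemma qm_diff x y u v :
  qsub (qm x u) (qm y v) = qadd (qm (qsub x y) u) (qm y (qsub u v)).
Proof using pp. qring. Qed.

Lemma qapprox_mul K N x y u v : qbd K y -> qbd K v ->
  qsm (N + K) (qsub x y) -> qsm (N + K) (qsub u v) ->
  qsm N (qsub (qm x u) (qm y v)).
Proof using pp.
move=> by_ bv hx hu; rewrite qm_diff.
have bu : qbd K u.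
  have -> : u = qadd (qsub u v) v by qring.
  by apply: qbd_add => //; apply: qbd_sm hu.
apply: qsm_add; first exact: qsm_mulr hx bu.
exact: qsm_mull by_ hu.
Qed.

Lemma qsm_le N N' x : (N <= N')%N -> qsm N' x -> qsm N x.
Proof using pp. by move=> le [????]; split; apply: pZ_le le _. Qed.

Lemma qsm_trans N x y z : qsm N (qsub x y) -> qsm N (qsub y z) -> qsm N (qsub x z).
Proof using pp.
move=> h1 h2; have -> : qsub x z = qadd (qsub x y) (qsub y z) by qring.
exact: qsm_add.
Qed.

Lemma qsm_refl N x : qsm N (qsub x x).
Proof using pp. have -> : qsub x x = qscal 0 by qring. by apply: qsm_scal; apply: pZ0. Qed.

Lemma qsm_sym N x y : qsm N (qsub x y) -> qsm N (qsub y x).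
Proof using pp. move=> h; have -> : qsub y x = qopp (qsub x y) by qring. exact: qsm_opp. Qed.

End QP.

End C.
Import C.

Module D.
Import Order.TTheory GRing.Theory Num.Theory.
Local Open Scope ring_scope.
Set Implicit Arguments. Unset Strict Implicit. Unset Printing Implicit Defensive.

Definition Nq (a b : int) (x : quat rat) := q0 (Dmul a b x (qconj x)).

Lemma NqM a b x y : Nq a b (Dmul a b x y) = Nq a b x * Nq a b y.
Proof. rewrite /Nq; qunf; ring. Qed.

Lemma NqE a b x : Nq a b x = q0 x ^+ 2 - a%:~R * q1 x ^+ 2 - b%:~R * q2 x ^+ 2 + a%:~R * b%:~R * q3 x ^+ 2.
Proof. rewrite /Nq; qunf; ring. Qed.

Section Ord.
Variable p : nat.
Hypothesis pp : prime p.
Variables a b : int.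
Variable O : quat rat -> Prop.
Hypothesis hO : is_order a b O.
Local Notation qm := (Dmul a b).
Local Notation N := (Nq a b).
Local Notation p_gt1 := (@p_gt1 p pp).
Local Notation p_gt0 := (@p_gt0 p pp).
Local Notation pR0 := (@pR0 p pp).
Local Notation pXR0 := (@pXR0 p pp).
Local Notation rat_to_int := (@rat_to_int p pp).
Local Notation pint_den := (@pint_den p pp).
Local Notation den_pint := (@den_pint p pp).
Local Notation pZ_scale := (@pZ_scale p pp).
Local Notation pZ0 := (@pZ0 p pp).
Local Notation pZ_int := (@pZ_int p pp).
Local Notation pZ_nat := (@pZ_nat p pp).
Local Notation pZ_add := (@pZ_add p pp).
Local Notation pZ_opp := (@pZ_opp p pp).
Local Notation pZ_sub := (@pZ_sub p pp).
Local Notation pZ_mul := (@pZ_mul p pp).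
Local Notation pZ_mul0 := (@pZ_mul0 p pp).
Local Notation pZ_mul0r := (@pZ_mul0r p pp).
Local Notation pZ_le := (@pZ_le p pp).
Local Notation pZ_p := (@pZ_p p pp).
Local Notation pZ_pX := (@pZ_pX p pp).
Local Notation pZ_div := (@pZ_div p pp).
Local Notation pZ_invnat := (@pZ_invnat p pp).
Local Notation pZ_inv := (@pZ_inv p pp).
Local Notation pZ_zero_all := (@pZ_zero_all p pp).
Local Notation pZ_bnd := (@pZ_bnd p pp).
Local Notation pZ_powbnd := (@pZ_powbnd p pp).
Local Notation pZ_sq := (@pZ_sq p pp).
Local Notation pZ_pm1 := (@pZ_pm1 p pp).
Local Notation bnd_add := (@bnd_add p pp).
Local Notation bnd_opp := (@bnd_opp p pp).
Local Notation bnd_int := (@bnd_int p pp).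
Local Notation bnd_mul := (@bnd_mul p pp).
Local Notation bnd_mono := (@bnd_mono p pp).
Local Notation bnd_pZ := (@bnd_pZ p pp).
Local Notation sm_mul := (@sm_mul p pp).
Local Notation bnd0 := (@bnd0 p pp).
Local Notation bnd_const := (@bnd_const p pp).
Local Notation qall_add := (@qall_add p pp).
Local Notation qall_opp := (@qall_opp p pp).
Local Notation qall_conj := (@qall_conj p pp).
Local Notation qsm_add := (@qsm_add p pp).
Local Notation qsm_opp := (@qsm_opp p pp).
Local Notation qsm_sub := (@qsm_sub p pp).
Local Notation qsm_conj := (@qsm_conj p pp).
Local Notation qbd_add := (@qbd_add p pp).
Local Notation qbd_opp := (@qbd_opp p pp).
Local Notation qbd_sub := (@qbd_sub p pp).
Local Notation qbd_conj := (@qbd_conj p pp).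
Local Notation qbd_mono := (@qbd_mono p pp).
Local Notation qbd_sm := (@qbd_sm p pp).
Local Notation qbd_scal := (@qbd_scal p pp).
Local Notation qsm_scal := (@qsm_scal p pp).
Local Notation qbd_const := (@qbd_const p pp).
Local Notation qsm_le := (@qsm_le p pp).
Local Notation qsm_trans := (@qsm_trans p pp).
Local Notation qsm_refl := (@qsm_refl p pp).
Local Notation qsm_sym := (@qsm_sym p pp).
Local Notation qmul_gen := (@qmul_gen p pp a b).
Local Notation qbd_mul := (@qbd_mul p pp a b).
Local Notation qsm_mull := (@qsm_mull p pp a b).
Local Notation qsm_mulr := (@qsm_mulr p pp a b).
Local Notation qm_diff := (@qm_diff p pp a b).
Local Notation qapprox_mul := (@qapprox_mul p pp a b).
Local Notation bnd := (@bnd p).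
Local Notation qbd := (@qbd p).
Local Notation qsm := (@qsm p).


Lemma O1 : O (qscal 1). Proof using hO. by case: hO. Qed.
Lemma Osub x y : O x -> O y -> O (qsub x y). Proof using hO. by case: hO => _ h _ _ _; apply: h. Qed.
Lemma Omul x y : O x -> O y -> O (qm x y). Proof using hO. by case: hO => _ _ h _ _; apply: h. Qed.
Lemma O0 : O (qscal 0).
Proof using hO. have -> : qscal (0 : rat) = qsub (qscal 1) (qscal 1) by qring. by apply: Osub; apply: O1. Qed.
Lemma Oopp x : O x -> O (qopp x).
Proof using hO. move=> h; have -> : qopp x = qsub (qscal 0) x by qring. by apply: Osub => //; apply: O0. Qed.
Lemma Oadd x y : O x -> O y -> O (qadd x y).
Proof using hO.
move=> h1 h2; have -> : qadd x y = qsub x (qopp y) by qring.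
by apply: Osub => //; apply: Oopp.
Qed.
Lemma Onat (n : nat) x : O x -> O (qscale n%:R x).
Proof using hO.
move=> h; elim: n => [|n ih].
  have -> : qscale (0%:R : rat) x = qscal 0 by qring.
  exact: O0.
have -> : qscale (n.+1%:R : rat) x = qadd (qscale n%:R x) x by qring.
exact: Oadd.
Qed.
Lemma Oint (z : int) x : O x -> O (qscale z%:~R x).
Proof using hO.
move=> h; case: z => n; first exact: Onat.
have -> : qscale ((Negz n)%:~R : rat) x = qopp (qscale n.+1%:R x).
  by rewrite NegzE; qring.
by apply: Oopp; apply: Onat.
Qed.
Lemma O_scal1 (z : int) : O (qscal z%:~R).
Proof using hO.
have -> : qscal (z%:~R : rat) = qscale z%:~R (qscal 1) by qring.
by apply: Oint; apply: O1.
Qed.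

Lemma qlin_bnd s : exists K, forall c, qbd K (qlin c s).
Proof using pp.
elim: s => [|w s [K ih]].
  by exists 0%N => c; case: c => [|??] /=; apply: qbd_scal; apply: bnd0.
case: (qbd_const w) => Kw hw.
exists (K + Kw)%N => [[|c0 c]] /=.
  by apply: qbd_scal; apply: bnd0.
apply: qbd_add => //.
  case: hw => h0 h1 h2 h3; rewrite /qscale; split => /=;
  by apply: bnd_int => //; apply: bnd_mono (leq_addl _ _) _.
by apply: qbd_mono (ih c) => //; apply: leq_addr.
Qed.

Lemma O_bnd : exists K, forall x, O x -> qbd K x.
Proof using pp hO.
case: hO => _ _ _ [s hs] _.
case: (qlin_bnd s) => K hK; exists K => x /hs [c [_ ->]]; exact: hK.
Qed.

Fixpoint qpow (x : quat rat) (k : nat) : quat rat :=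
  if k is k'.+1 then qm x (qpow x k') else qscal 1.

Lemma O_pow x k : O x -> O (qpow x k).
Proof using hO. by move=> h; elim: k => [|k ih] /=; [apply: O1 | apply: Omul]. Qed.

Lemma N_pow x k : N (qpow x k) = N x ^+ k.
Proof. elim: k => [|k ih] /=; first by rewrite /Nq; qunf; ring. by rewrite NqM ih exprS. Qed.

Lemma N_bnd K x : qbd K x -> bnd (K + K) (N x).
Proof using pp.
move=> h; have := qbd_mul h (qbd_conj h); by case.
Qed.

Lemma O_N x : O x -> in_pZ p 0 (N x).
Proof using pp hO.
move=> hx; case: O_bnd => K hK.
apply: (@pZ_powbnd (K + K)) => k; rewrite -N_pow.
apply: N_bnd; apply: hK; exact: O_pow.
Qed.

Lemma O_tr x : O x -> in_pZ p 0 (2 * q0 x).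
Proof using pp hO.
move=> hx.
have e : 2 * q0 x = N (qadd x (qscal 1)) - N x - 1 by rewrite /Nq; qunf; ring.
rewrite e; apply: pZ_sub => //; last exact: (pZ_nat 1).
apply: pZ_sub => //; apply: O_N => //; apply: Oadd => //; exact: O1.
Qed.

Definition Op x := exists d : nat, ~~ (p %| d)%N /\ O (qscale d%:R x).

Lemma O_Op x : O x -> Op x.
Proof using pp hO.
move=> h; exists 1%N; split; first by rewrite dvdn1; apply/eqP => p1; move: (prime_gt1 pp); rewrite p1.
by have -> : qscale (1%:R : rat) x = x by qring.
Qed.

Lemma Op_add x y : Op x -> Op y -> Op (qadd x y).
Proof using pp hO.
move=> [d1 [n1 h1]] [d2 [n2 h2]]; exists (d1 * d2)%N; split.
  by rewrite Euclid_dvdM // negb_or n1 n2.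
have -> : qscale (d1 * d2)%:R (qadd x y) = qadd (qscale d2%:R (qscale d1%:R x)) (qscale d1%:R (qscale d2%:R y)).
  by rewrite natrM; qring.
by apply: Oadd; apply: Onat.
Qed.

Lemma Op_mul x y : Op x -> Op y -> Op (qm x y).
Proof using pp hO.
move=> [d1 [n1 h1]] [d2 [n2 h2]]; exists (d1 * d2)%N; split.
  by rewrite Euclid_dvdM // negb_or n1 n2.
have -> : qscale (d1 * d2)%:R (qm x y) = qm (qscale d1%:R x) (qscale d2%:R y).
  by rewrite natrM; qring.
exact: Omul.
Qed.

Lemma Op_scale c x : in_pZ p 0 c -> O x -> Op (qscale c x).
Proof using pp hO.
move=> [m [d [nd e]]] hx; exists d; split => //.
have -> : qscale d%:R (qscale c x) = qscale m%:~R x.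
  by rewrite expn0 mul1r in e; apply: quatE; rewrite /qscale /= -e; ring.
exact: Oint.
Qed.

Lemma Op_scale2 c x : in_pZ p 0 c -> Op x -> Op (qscale c x).
Proof using pp hO.
move=> [m [d [nd e]]] [d' [nd' hx]]; exists (d * d')%N; split.
  by rewrite Euclid_dvdM // negb_or nd nd'.
have -> : qscale (d * d')%:R (qscale c x) = qscale m%:~R (qscale d'%:R x).
  by rewrite expn0 mul1r in e; apply: quatE; rewrite /qscale /= natrM -e; ring.
exact: Oint.
Qed.

Lemma Op_conjO x : O x -> Op (qconj x).
Proof using pp hO.
move=> hx; have [m [d [nd e]]] := O_tr hx.
exists d; split => //.
have -> : qscale d%:R (qconj x) = qsub (qscal m%:~R) (qscale d%:R x).
  rewrite expn0 mul1r in e; apply: quatE; rewrite /qscale /qsub /qadd /qopp /qscal /= -?e; ring.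
by apply: Osub; [apply: O_scal1 | apply: Onat].
Qed.

Lemma Op_conj x : Op x -> Op (qconj x).
Proof using pp hO.
move=> [d [nd hx]]; have [d' [nd' h]] := Op_conjO hx.
exists (d' * d)%N; split; first by rewrite Euclid_dvdM // negb_or nd nd'.
by have -> : qscale (d' * d)%:R (qconj x) = qscale d'%:R (qconj (qscale d%:R x)) by rewrite natrM; qring.
Qed.

Lemma Op1 : Op (qscal 1). Proof using pp hO. exact: O_Op (O1). Qed.
Lemma Op0 : Op (qscal 0). Proof using pp hO. exact: O_Op (O0). Qed.

Lemma Op_bnd : exists K, forall x, Op x -> qbd K x.
Proof using pp hO.
case: O_bnd => K hK; exists K => x [d [nd hx]].
have hi := pZ_invnat nd.
have d0 : (d%:R : rat) != 0 by rewrite pnatr_eq0; apply/eqP => d0; move: nd; rewrite d0 dvdn0.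
case: (hK _ hx) => /= h0 h1 h2 h3.
have f : forall u, bnd K (d%:R * u) -> bnd K u.
  move=> u hu; rewrite /C.bnd.
  have -> : (p ^ K)%:R * u = d%:R^-1 * ((p ^ K)%:R * (d%:R * u)) by field.
  exact: pZ_mul0 hi hu.
by split; apply: f.
Qed.

Lemma Op_N x : Op x -> in_pZ p 0 (N x).
Proof using pp hO.
move=> [d [nd hx]]; have h := O_N hx.
have hi := pZ_invnat nd.
have d0 : (d%:R : rat) != 0 by rewrite pnatr_eq0; apply/eqP => d0; move: nd; rewrite d0 dvdn0.
have -> : N x = d%:R^-1 * (d%:R^-1 * N (qscale d%:R x)).
  rewrite /Nq; qunf; field; done.
by apply: pZ_mul0 => //; apply: pZ_mul0.
Qed.

Lemma Op_tr x : Op x -> in_pZ p 0 (2 * q0 x).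
Proof using pp hO.
move=> hx.
have e : 2 * q0 x = N (qadd x (qscal 1)) - N x - 1 by rewrite /Nq; qunf; ring.
rewrite e; apply: pZ_sub => //; last exact: (pZ_nat 1).
apply: pZ_sub => //; apply: Op_N => //; apply: Op_add => //; exact: Op1.
Qed.

End Ord.

End D.
Import D.

Module E.
Import Order.TTheory GRing.Theory Num.Theory.
Local Open Scope ring_scope.
Set Implicit Arguments. Unset Strict Implicit. Unset Printing Implicit Defensive.

Section Hensel.
Variable p : nat.
Hypothesis pp : prime p.
Variables a b : int.
Local Notation p_gt1 := (@p_gt1 p pp).
Local Notation p_gt0 := (@p_gt0 p pp).
Local Notation pR0 := (@pR0 p pp).
Local Notation pXR0 := (@pXR0 p pp).
Local Notation rat_to_int := (@rat_to_int p pp).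
Local Notation pint_den := (@pint_den p pp).
Local Notation den_pint := (@den_pint p pp).
Local Notation pZ_scale := (@pZ_scale p pp).
Local Notation pZ0 := (@pZ0 p pp).
Local Notation pZ_int := (@pZ_int p pp).
Local Notation pZ_nat := (@pZ_nat p pp).
Local Notation pZ_add := (@pZ_add p pp).
Local Notation pZ_opp := (@pZ_opp p pp).
Local Notation pZ_sub := (@pZ_sub p pp).
Local Notation pZ_mul := (@pZ_mul p pp).
Local Notation pZ_mul0 := (@pZ_mul0 p pp).
Local Notation pZ_mul0r := (@pZ_mul0r p pp).
Local Notation pZ_le := (@pZ_le p pp).
Local Notation pZ_p := (@pZ_p p pp).
Local Notation pZ_pX := (@pZ_pX p pp).
Local Notation pZ_div := (@pZ_div p pp).
Local Notation pZ_invnat := (@pZ_invnat p pp).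
Local Notation pZ_inv := (@pZ_inv p pp).
Local Notation pZ_zero_all := (@pZ_zero_all p pp).
Local Notation pZ_bnd := (@pZ_bnd p pp).
Local Notation pZ_powbnd := (@pZ_powbnd p pp).
Local Notation pZ_sq := (@pZ_sq p pp).
Local Notation pZ_pm1 := (@pZ_pm1 p pp).
Local Notation bnd_add := (@bnd_add p pp).
Local Notation bnd_opp := (@bnd_opp p pp).
Local Notation bnd_int := (@bnd_int p pp).
Local Notation bnd_mul := (@bnd_mul p pp).
Local Notation bnd_mono := (@bnd_mono p pp).
Local Notation bnd_pZ := (@bnd_pZ p pp).
Local Notation sm_mul := (@sm_mul p pp).
Local Notation bnd0 := (@bnd0 p pp).
Local Notation bnd_const := (@bnd_const p pp).
Local Notation qall_add := (@qall_add p pp).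
Local Notation qall_opp := (@qall_opp p pp).
Local Notation qall_conj := (@qall_conj p pp).
Local Notation qsm_add := (@qsm_add p pp).
Local Notation qsm_opp := (@qsm_opp p pp).
Local Notation qsm_sub := (@qsm_sub p pp).
Local Notation qsm_conj := (@qsm_conj p pp).
Local Notation qbd_add := (@qbd_add p pp).
Local Notation qbd_opp := (@qbd_opp p pp).
Local Notation qbd_sub := (@qbd_sub p pp).
Local Notation qbd_conj := (@qbd_conj p pp).
Local Notation qbd_mono := (@qbd_mono p pp).
Local Notation qbd_sm := (@qbd_sm p pp).
Local Notation qbd_scal := (@qbd_scal p pp).
Local Notation qsm_scal := (@qsm_scal p pp).
Local Notation qbd_const := (@qbd_const p pp).
Local Notation qsm_le := (@qsm_le p pp).
Local Notation qsm_trans := (@qsm_trans p pp).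
Local Notation qsm_refl := (@qsm_refl p pp).
Local Notation qsm_sym := (@qsm_sym p pp).
Local Notation qmul_gen := (@qmul_gen p pp a b).
Local Notation qbd_mul := (@qbd_mul p pp a b).
Local Notation qsm_mull := (@qsm_mull p pp a b).
Local Notation qsm_mulr := (@qsm_mulr p pp a b).
Local Notation qm_diff := (@qm_diff p pp a b).
Local Notation qapprox_mul := (@qapprox_mul p pp a b).
Local Notation bnd := (@bnd p).
Local Notation qbd := (@qbd p).
Local Notation qsm := (@qsm p).

Local Notation N := (Nq a b).

Lemma rc_const c : rcauchy p (fun _ => c).
Proof using pp. by move=> K; exists 0%N => m n _ _; rewrite subrr; apply: pZ0. Qed.

Lemma rn_const c : rnull p (fun _ => c) -> c = 0.
Proof using pp.
move=> h; apply: pZ_zero_all => K; case: (h K) => M hM; exact: (hM M).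
Qed.

Lemma rc_neg (c : nat -> rat) u : rcauchy p c -> rcauchy p (fun n => u + - c n).
Proof using pp.
move=> h K; case: (h K) => M hM; exists M => m n hm hn.
have -> : u + - c m - (u + - c n) = - (c m - c n) by ring.
by apply: pZ_opp; apply: hM.
Qed.
Lemma rc_neg2 (c : nat -> rat) u v : rcauchy p c -> rcauchy p (fun n => u + - (v - c n)).
Proof using pp.
move=> h K; case: (h K) => M hM; exists M => m n hm hn.
have -> : u + - (v - c m) - (u + - (v - c n)) = c m - c n by ring.
by apply: hM.
Qed.

Lemma hensel (hr : ramified_at a b p) (z : quat rat) :
  in_pZ p 0 (2 * q0 z) -> in_pZ p 1 (N z) -> in_pZ p 1 (2 * q0 z).
Proof using pp.
move=> ht hm; apply: NNPP => H.
set t := 2 * q0 z in ht H; set m := N z in hm.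
have [hz | hz] := boolP [&& q1 z == 0, q2 z == 0 & q3 z == 0].
  case/and3P: hz => /eqP h1 /eqP h2 /eqP h3.
  have : m = q0 z * q0 z by rewrite /m /Nq; qunf; rewrite h1 h2 h3; ring.
  move=> e; rewrite e in hm; have := pZ_sq hm => h0.
  by apply: H; rewrite /t; apply: pZ_mul0 => //; apply: (pZ_nat 2).
pose fix al k := if k is k'.+1 then m / (t - al k') else 0.
have unit : forall k, in_pZ p 1 (al k) -> t - al k != 0 /\ in_pZ p 0 ((t - al k)^-1).
  move=> k hk; apply: pZ_inv; first by apply: pZ_sub => //; apply: pZ_le hk.
  move=> h; apply: H; have -> : t = (t - al k) + al k by ring.
  exact: pZ_add.
have c1 : forall k, in_pZ p 1 (al k).
  elim=> [|k ih] /=; first exact: pZ0.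
  by have [_ hi] := unit k ih; apply: pZ_mul0r.
have c2 : forall k, in_pZ p k.+1 (al k.+1 - al k).
  elim=> [|k ih]; first by rewrite /= subr0; exact: (c1 1%N).
  have [u1 i1] := unit k.+1 (c1 _); have [u0 i0] := unit k (c1 _).
  have -> : al k.+2 - al k.+1 = m * (al k.+1 - al k) * ((t - al k.+1)^-1 * (t - al k)^-1).
    rewrite [al k.+2]/= [al k.+1]/=; field; rewrite /= in u0 u1; rewrite u0 /=; move: (mulf_neq0 u1 u0); rewrite mulrBl divfK // [X in X - _]mulrC.
  apply: pZ_mul0r; last by apply: pZ_mul0.
  by have := pZ_mul hm ih; rewrite add1n.
have c3 : forall k, in_pZ p k.+1 (- (al k ^+ 2 - t * al k + m)).
  move=> k; have [u0 i0] := unit k (c1 _).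
  have -> : - (al k ^+ 2 - t * al k + m) = (al k.+1 - al k) * (t - al k) * (-1).
    rewrite [al k.+1]/=; field; by rewrite u0.
  apply: pZ_mul0r; last by apply: pZ_int (-1).
  apply: pZ_mul0r; first exact: c2.
  by apply: pZ_sub => //; apply: pZ_le (c1 k).
have c4 : forall K j, in_pZ p K (al (K + j)%N - al K).
  move=> K; elim=> [|j ih]; first by rewrite addn0 subrr; apply: pZ0.
  have -> : al (K + j.+1)%N - al K = (al (K + j).+1 - al (K + j)%N) + (al (K + j)%N - al K).
    by rewrite addnS; ring.
  apply: pZ_add => //; apply: pZ_le (c2 _); lia.
have rca : rcauchy p al.
  move=> K; exists K => m' n hm' hn.
  have -> : al m' - al n = (al (K + (m' - K))%N - al K) - (al (K + (n - K))%N - al K).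
    by rewrite !subnKC //; ring.
  by apply: pZ_sub.
pose X n := qsub z (qscal (al n)).
pose Y n := qsub z (qscal (t - al n)).
have cX : qcauchy p X.
  split; rewrite /X /qsub /qadd /qopp /qscal /=; try exact: rc_const.
  exact: rc_neg.
have cY : qcauchy p Y.
  split; rewrite /Y /qsub /qadd /qopp /qscal /=; try exact: rc_const.
  exact: rc_neg2.
have nn : forall c, ~ qnull p (fun n => qsub z (qscal (c n))).
  move=> c [_ h1 h2 h3]; move/negP: hz; apply.
  rewrite /qsub /qadd /qopp /qscal /= oppr0 !addr0 in h1 h2 h3.
  by rewrite (rn_const h1) (rn_const h2) (rn_const h3) !eqxx.
apply: (hr X Y cX cY (nn _) (nn _)).
have e : forall n, Dmul a b (X n) (Y n) = qscal (- (al n ^+ 2 - t * al n + m)).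
  move=> n; rewrite /X /Y /t /m /Nq; qring.
split=> K; exists K => n hn; rewrite e /=; try exact: pZ0.
apply: pZ_le (c3 n); lia.
Qed.

End Hensel.

End E.
Import E.

Module F.
Import Order.TTheory GRing.Theory Num.Theory.
Local Open Scope ring_scope.
Set Implicit Arguments. Unset Strict Implicit. Unset Printing Implicit Defensive.

Lemma Nq_conj a b x : Nq a b (qconj x) = Nq a b x.
Proof. rewrite /Nq; qunf; ring. Qed.

Lemma QL_id a b x y lam mu :
  Nq a b x + Nq a b (qadd (Dmul a b x lam) (Dmul a b y mu)) =
  Nq a b x * (1 + Nq a b lam) + Nq a b y * Nq a b mu +
  2 * q0 (Dmul a b (Dmul a b x lam) (qconj (Dmul a b y mu))).
Proof. rewrite /Nq; qunf; ring. Qed.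

Section LamMu.
Variable p : nat.
Hypothesis pp : prime p.
Variables a b : int.
Local Notation p_gt1 := (@p_gt1 p pp).
Local Notation p_gt0 := (@p_gt0 p pp).
Local Notation pR0 := (@pR0 p pp).
Local Notation pXR0 := (@pXR0 p pp).
Local Notation rat_to_int := (@rat_to_int p pp).
Local Notation pint_den := (@pint_den p pp).
Local Notation den_pint := (@den_pint p pp).
Local Notation pZ_scale := (@pZ_scale p pp).
Local Notation pZ0 := (@pZ0 p pp).
Local Notation pZ_int := (@pZ_int p pp).
Local Notation pZ_nat := (@pZ_nat p pp).
Local Notation pZ_add := (@pZ_add p pp).
Local Notation pZ_opp := (@pZ_opp p pp).
Local Notation pZ_sub := (@pZ_sub p pp).
Local Notation pZ_mul := (@pZ_mul p pp).
Local Notation pZ_mul0 := (@pZ_mul0 p pp).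
Local Notation pZ_mul0r := (@pZ_mul0r p pp).
Local Notation pZ_le := (@pZ_le p pp).
Local Notation pZ_p := (@pZ_p p pp).
Local Notation pZ_pX := (@pZ_pX p pp).
Local Notation pZ_div := (@pZ_div p pp).
Local Notation pZ_invnat := (@pZ_invnat p pp).
Local Notation pZ_inv := (@pZ_inv p pp).
Local Notation pZ_zero_all := (@pZ_zero_all p pp).
Local Notation pZ_bnd := (@pZ_bnd p pp).
Local Notation pZ_powbnd := (@pZ_powbnd p pp).
Local Notation pZ_sq := (@pZ_sq p pp).
Local Notation pZ_pm1 := (@pZ_pm1 p pp).
Local Notation bnd_add := (@bnd_add p pp).
Local Notation bnd_opp := (@bnd_opp p pp).
Local Notation bnd_int := (@bnd_int p pp).
Local Notation bnd_mul := (@bnd_mul p pp).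
Local Notation bnd_mono := (@bnd_mono p pp).
Local Notation bnd_pZ := (@bnd_pZ p pp).
Local Notation sm_mul := (@sm_mul p pp).
Local Notation bnd0 := (@bnd0 p pp).
Local Notation bnd_const := (@bnd_const p pp).
Local Notation qall_add := (@qall_add p pp).
Local Notation qall_opp := (@qall_opp p pp).
Local Notation qall_conj := (@qall_conj p pp).
Local Notation qsm_add := (@qsm_add p pp).
Local Notation qsm_opp := (@qsm_opp p pp).
Local Notation qsm_sub := (@qsm_sub p pp).
Local Notation qsm_conj := (@qsm_conj p pp).
Local Notation qbd_add := (@qbd_add p pp).
Local Notation qbd_opp := (@qbd_opp p pp).
Local Notation qbd_sub := (@qbd_sub p pp).
Local Notation qbd_conj := (@qbd_conj p pp).
Local Notation qbd_mono := (@qbd_mono p pp).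
Local Notation qbd_sm := (@qbd_sm p pp).
Local Notation qbd_scal := (@qbd_scal p pp).
Local Notation qsm_scal := (@qsm_scal p pp).
Local Notation qbd_const := (@qbd_const p pp).
Local Notation qsm_le := (@qsm_le p pp).
Local Notation qsm_trans := (@qsm_trans p pp).
Local Notation qsm_refl := (@qsm_refl p pp).
Local Notation qsm_sym := (@qsm_sym p pp).
Local Notation qmul_gen := (@qmul_gen p pp a b).
Local Notation qbd_mul := (@qbd_mul p pp a b).
Local Notation qsm_mull := (@qsm_mull p pp a b).
Local Notation qsm_mulr := (@qsm_mulr p pp a b).
Local Notation qm_diff := (@qm_diff p pp a b).
Local Notation qapprox_mul := (@qapprox_mul p pp a b).
Local Notation bnd := (@bnd p).
Local Notation qbd := (@qbd p).
Local Notation qsm := (@qsm p).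

Variable O : quat rat -> Prop.
Hypothesis hO : is_order a b O.
Variables lam mu : quat rat.
Hypothesis Olam : O lam.
Hypothesis Omu : O mu.
Hypothesis hlam : Dmul a b lam (qconj lam) = qscal (p%:R - 1).
Hypothesis hmu : Dmul a b mu (qconj mu) = qscal p%:R.
Hypothesis hr : ramified_at a b p.
Local Notation N := (Nq a b).
Local Notation qm := (Dmul a b).
Local Notation Op := (@Op p O).
Local Notation Op_add := (@Op_add p pp a b O hO).
Local Notation Op_mul := (@Op_mul p pp a b O hO).
Local Notation Op_conj := (@Op_conj p pp a b O hO).
Local Notation Op_N := (@Op_N p pp a b O hO).
Local Notation Op_tr := (@Op_tr p pp a b O hO).
Local Notation O_Op := (@O_Op p pp a b O hO).
Local Notation Op_scale := (@Op_scale p pp a b O hO).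
Local Notation Op0 := (@Op0 p pp a b O hO).

Lemma Nlam : N lam = p%:R - 1. Proof. by rewrite /Nq hlam. Qed.
Lemma Nmu : N mu = p%:R. Proof. by rewrite /Nq hmu. Qed.

Lemma F2 x y : Op x -> Op y -> in_pZ p 1 (2 * q0 (qm (qm x lam) (qconj (qm y mu)))).
Proof using pp hO Olam Omu hmu hr.
move=> hx hy.
have hu : Op (qm x lam) by apply: Op_mul => //; apply: O_Op.
have hv : Op (qm y mu) by apply: Op_mul => //; apply: O_Op.
have hz : Op (qm (qm x lam) (qconj (qm y mu))) by apply: Op_mul => //; apply: Op_conj.
apply: (hensel pp hr); first exact: Op_tr.
rewrite NqM Nq_conj [N (qm y mu)]NqM Nmu.
apply: pZ_mul0; first exact: Op_N.
by apply: pZ_mul0; [exact: Op_N | exact: pZ_p].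
Qed.

Lemma QL x y : Op x -> Op y -> in_pZ p 1 (N x + N (qadd (qm x lam) (qm y mu))).
Proof using pp hO Olam Omu hlam hmu hr.
move=> hx hy; rewrite QL_id Nlam Nmu.
have -> : 1 + (p%:R - 1) = (p%:R : rat) by ring.
apply: pZ_add; last exact: F2.
apply: pZ_add; rewrite mulrC; apply: pZ_mul0r; (try exact: pZ_p); exact: Op_N.
Qed.

Definition Lp (v : quat rat * quat rat) :=
  exists x y, Op x /\ Op y /\ v.1 = x /\ v.2 = qadd (qm x lam) (qm y mu).

Lemma Lp_fold (F : nat -> rat) (w : nat -> quat rat * quat rat) s :
  (forall i, i \in s -> in_pZ p 0 (F i) /\ O2g a b O (M2 (qscal 1) lam (qscal 0) mu) (w i)) ->
  Lp (foldr (fun i acc => qadd (qscale (F i) (w i).1) acc) (qscal 0) s,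
      foldr (fun i acc => qadd (qscale (F i) (w i).2) acc) (qscal 0) s).
Proof using pp hO.
elim: s => [|i s ih] h /=.
  exists (qscal 0), (qscal 0); split; first exact: Op0.
  split; first exact: Op0. by split => //; qring.
have [x' [y' [hx' [hy' [e1 e2]]]]] := ih (fun j hj => h j (mem_behead (s:=i :: s) hj)).
have [hF [x [y [hx [hy ew]]]]] := h i (mem_head _ _).
exists (qadd (qscale (F i) x) x'), (qadd (qscale (F i) y) y'); split.
  by apply: Op_add => //; apply: Op_scale.
split; first by apply: Op_add => //; apply: Op_scale.
rewrite /= in e1 e2; rewrite e1 e2 ew /=; split; qring.
Qed.

Lemma Lp_sum k (c : nat -> rat) (w : nat -> quat rat * quat rat) :
  (forall i, (i < k)%N -> in_pZ p 0 (c i) /\ O2g a b O (M2 (qscal 1) lam (qscal 0) mu) (w i)) ->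
  Lp (qsumk k (fun i => qscale (c i) (w i).1), qsumk k (fun i => qscale (c i) (w i).2)).
Proof using pp hO.
move=> h; apply: Lp_fold => i; rewrite mem_iota add0n => /andP [_ hi]; exact: h.
Qed.

Lemma Op_fold (F : nat -> rat) (w : nat -> quat rat) s :
  (forall i, i \in s -> in_pZ p 0 (F i) /\ O (w i)) ->
  Op (foldr (fun i acc => qadd (qscale (F i) (w i)) acc) (qscal 0) s).
Proof using pp hO.
elim: s => [|i s ih] h /=; first exact: Op0.
apply: Op_add; last by apply: ih => j hj; apply: h; rewrite inE hj orbT.
by have [??] := h i (mem_head _ _); apply: Op_scale.
Qed.

Lemma Op_sum k (c : nat -> rat) (w : nat -> quat rat) :
  (forall i, (i < k)%N -> in_pZ p 0 (c i) /\ O (w i)) ->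
  Op (qsumk k (fun i => qscale (c i) (w i))).
Proof using pp hO.
move=> h; apply: Op_fold => i; rewrite mem_iota add0n => /andP [_ hi]; exact: h.
Qed.

End LamMu.

End F.
Import F.

Module G.
Import Order.TTheory GRing.Theory Num.Theory.
Local Open Scope ring_scope.
Set Implicit Arguments. Unset Strict Implicit. Unset Printing Implicit Defensive.

Section QL2.
Variables a b : int.
Local Notation qm := (Dmul a b).
Implicit Types x y z : quat rat.
Lemma DmA x y z : qm x (qm y z) = qm (qm x y) z. Proof. qring. Qed.
Lemma DmDl x y z : qm (qadd x y) z = qadd (qm x z) (qm y z). Proof. qring. Qed.
Lemma DmDr x y z : qm z (qadd x y) = qadd (qm z x) (qm z y). Proof. qring. Qed.
Lemma qconjD x y : qconj (qadd x y) = qadd (qconj x) (qconj y). Proof. qring. Qed.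
Lemma qconjM x y : qconj (qm x y) = qm (qconj y) (qconj x). Proof. qring. Qed.
Lemma qconjB x y : qconj (qsub x y) = qsub (qconj x) (qconj y). Proof. qring. Qed.
Lemma qsubDD x y u v : qsub (qadd x y) (qadd u v) = qadd (qsub x u) (qsub y v). Proof. qring. Qed.
Lemma qm3B x y h s : qsub (qm x (qm h y)) (qm x (qm s y)) = qm x (qm (qsub h s) y). Proof. qring. Qed.
Lemma qmcB c u v : qsub (qm c u) (qm c v) = qm c (qsub u v). Proof. qring. Qed.
Lemma qscal4 (s : rat) x1 y1 x2 y2 :
  qadd (qadd (qm x1 (qm (qscal s) x2)) (qm x1 (qm (qscal 0) y2)))
       (qadd (qm y1 (qm (qscal 0) x2)) (qm y1 (qm (qscal s) y2))) =
  qm (qscal s) (qadd (qm x1 x2) (qm y1 y2)).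
Proof.
have e : forall (c : rat) x y, qm x (qm (qscal c) y) = qscale c (qm x y) by move=> c x y; qring.
have e2 : forall (c : rat) x, qm (qscal c) x = qscale c x by move=> c x; qring.
rewrite !e e2; apply: quatE; rewrite /qadd /qscale /=; ring.
Qed.
Lemma qm1l x : qm (qscal 1) x = x. Proof. qring. Qed.
Lemma qm1r x : qm x (qscal 1) = x. Proof. qring. Qed.
Lemma qm0l x : qm (qscal 0) x = qscal 0. Proof. qring. Qed.
Lemma qm0r x : qm x (qscal 0) = qscal 0. Proof. qring. Qed.
Lemma qadd0l x : qadd (qscal 0) x = x. Proof. qring. Qed.
Lemma qadd0r x : qadd x (qscal 0) = x. Proof. qring. Qed.
Lemma qconj_scal (c : rat) : qconj (qscal c) = qscal c. Proof. qring. Qed.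
Lemma Nq_scal s : Nq a b (qscal s) = s ^+ 2. Proof. rewrite /Nq; qunf; ring. Qed.
End QL2.

Definition Bf a b (v w : quat rat * quat rat) :=
  qadd (Dmul a b v.1 (qconj w.1)) (Dmul a b v.2 (qconj w.2)).

Lemma Bexp a b x1 y1 x2 y2 h :
  let H := Dmmul a b h (mconjT h) in
  Bf a b (Dvmul a b (x1, y1) h) (Dvmul a b (x2, y2) h) =
  qadd (qadd (Dmul a b x1 (Dmul a b (e11 H) (qconj x2))) (Dmul a b x1 (Dmul a b (e12 H) (qconj y2))))
       (qadd (Dmul a b y1 (Dmul a b (e21 H) (qconj x2))) (Dmul a b y1 (Dmul a b (e22 H) (qconj y2)))).
Proof.
case: h => h11 h12 h21 h22 /=.
rewrite /Bf /Dvmul /vmul /Dmmul /mmul /mconjT /mtr /mconj /= -/(Dmul a b).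
rewrite !qconjD !qconjM !DmDl !DmDr !DmA.
apply: quatE; rewrite /qadd /=; ring.
Qed.

Section Core.
Variable p : nat.
Hypothesis pp : prime p.
Variables a b : int.
Local Notation p_gt1 := (@p_gt1 p pp).
Local Notation p_gt0 := (@p_gt0 p pp).
Local Notation pR0 := (@pR0 p pp).
Local Notation pXR0 := (@pXR0 p pp).
Local Notation rat_to_int := (@rat_to_int p pp).
Local Notation pint_den := (@pint_den p pp).
Local Notation den_pint := (@den_pint p pp).
Local Notation pZ_scale := (@pZ_scale p pp).
Local Notation pZ0 := (@pZ0 p pp).
Local Notation pZ_int := (@pZ_int p pp).
Local Notation pZ_nat := (@pZ_nat p pp).
Local Notation pZ_add := (@pZ_add p pp).
Local Notation pZ_opp := (@pZ_opp p pp).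
Local Notation pZ_sub := (@pZ_sub p pp).
Local Notation pZ_mul := (@pZ_mul p pp).
Local Notation pZ_mul0 := (@pZ_mul0 p pp).
Local Notation pZ_mul0r := (@pZ_mul0r p pp).
Local Notation pZ_le := (@pZ_le p pp).
Local Notation pZ_p := (@pZ_p p pp).
Local Notation pZ_pX := (@pZ_pX p pp).
Local Notation pZ_div := (@pZ_div p pp).
Local Notation pZ_invnat := (@pZ_invnat p pp).
Local Notation pZ_inv := (@pZ_inv p pp).
Local Notation pZ_zero_all := (@pZ_zero_all p pp).
Local Notation pZ_bnd := (@pZ_bnd p pp).
Local Notation pZ_powbnd := (@pZ_powbnd p pp).
Local Notation pZ_sq := (@pZ_sq p pp).
Local Notation pZ_pm1 := (@pZ_pm1 p pp).
Local Notation bnd_add := (@bnd_add p pp).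
Local Notation bnd_opp := (@bnd_opp p pp).
Local Notation bnd_int := (@bnd_int p pp).
Local Notation bnd_mul := (@bnd_mul p pp).
Local Notation bnd_mono := (@bnd_mono p pp).
Local Notation bnd_pZ := (@bnd_pZ p pp).
Local Notation sm_mul := (@sm_mul p pp).
Local Notation bnd0 := (@bnd0 p pp).
Local Notation bnd_const := (@bnd_const p pp).
Local Notation qall_add := (@qall_add p pp).
Local Notation qall_opp := (@qall_opp p pp).
Local Notation qall_conj := (@qall_conj p pp).
Local Notation qsm_add := (@qsm_add p pp).
Local Notation qsm_opp := (@qsm_opp p pp).
Local Notation qsm_sub := (@qsm_sub p pp).
Local Notation qsm_conj := (@qsm_conj p pp).
Local Notation qbd_add := (@qbd_add p pp).
Local Notation qbd_opp := (@qbd_opp p pp).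
Local Notation qbd_sub := (@qbd_sub p pp).
Local Notation qbd_conj := (@qbd_conj p pp).
Local Notation qbd_mono := (@qbd_mono p pp).
Local Notation qbd_sm := (@qbd_sm p pp).
Local Notation qbd_scal := (@qbd_scal p pp).
Local Notation qsm_scal := (@qsm_scal p pp).
Local Notation qbd_const := (@qbd_const p pp).
Local Notation qsm_le := (@qsm_le p pp).
Local Notation qsm_trans := (@qsm_trans p pp).
Local Notation qsm_refl := (@qsm_refl p pp).
Local Notation qsm_sym := (@qsm_sym p pp).
Local Notation qmul_gen := (@qmul_gen p pp a b).
Local Notation qbd_mul := (@qbd_mul p pp a b).
Local Notation qsm_mull := (@qsm_mull p pp a b).
Local Notation qsm_mulr := (@qsm_mulr p pp a b).
Local Notation qm_diff := (@qm_diff p pp a b).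
Local Notation qapprox_mul := (@qapprox_mul p pp a b).
Local Notation bnd := (@bnd p).
Local Notation qbd := (@qbd p).
Local Notation qsm := (@qsm p).

Variable O : quat rat -> Prop.
Hypothesis hO : is_order a b O.
Variables lam mu : quat rat.
Hypothesis Olam : O lam.
Hypothesis Omu : O mu.
Hypothesis hlam : Dmul a b lam (qconj lam) = qscal (p%:R - 1).
Hypothesis hmu : Dmul a b mu (qconj mu) = qscal p%:R.
Hypothesis hr : ramified_at a b p.
Local Notation N := (Nq a b).
Local Notation qm := (Dmul a b).
Local Notation Op := (@Op p O).
Local Notation Op_add := (@Op_add p pp a b O hO).
Local Notation Op_mul := (@Op_mul p pp a b O hO).
Local Notation Op_conj := (@Op_conj p pp a b O hO).
Local Notation Op_N := (@Op_N p pp a b O hO).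
Local Notation O_Op := (@O_Op p pp a b O hO).
Local Notation Lp := (@Lp p a b O lam mu).
Local Notation QL := (@QL p pp a b O hO lam mu Olam Omu hlam hmu hr).

Definition gg := M2 (qscal 1) lam (qscal 0) mu.
Definition W1 := Dvmul a b (qscal 1, qscal 0) gg.
Definition W2 := Dvmul a b (qscal 0, qscal 1) gg.

Lemma core (hh : mat2 rat) (sn : rat) (x1 y1 x2 y2 A1 B1 A2 B2 : quat rat)
   (S : quat rat * quat rat) (K0 KK Q : nat) :
  (forall x, Op x -> qbd K0 x) -> (K0 <= KK)%N ->
  qbd KK W1.1 -> qbd KK W1.2 -> qbd KK W2.1 -> qbd KK W2.2 -> bnd KK sn ->
  Q = (2 + (KK + KK) + KK + KK)%N ->
  let H := Dmmul a b hh (mconjT hh) in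
  qsm Q (qsub (e11 H) (qscal sn)) -> qsm Q (qsub (e12 H) (qscal 0)) ->
  qsm Q (qsub (e21 H) (qscal 0)) -> qsm Q (qsub (e22 H) (qscal sn)) ->
  Lp S -> qsm Q (qsub (e11 hh) S.1) -> qsm Q (qsub (e12 hh) S.2) ->
  let T1 := Dvmul a b (x1, y1) hh in let T2 := Dvmul a b (x2, y2) hh in
  qsm Q (qsub W1.1 T1.1) -> qsm Q (qsub W1.2 T1.2) ->
  qsm Q (qsub W2.1 T2.1) -> qsm Q (qsub W2.2 T2.2) ->
  Op A1 -> Op B1 -> Op A2 -> Op B2 ->
  qsm Q (qsub x1 A1) -> qsm Q (qsub y1 B1) -> qsm Q (qsub x2 A2) -> qsm Q (qsub y2 B2) ->
  False.
Proof using pp hO Olam Omu hlam hmu hr.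
move=> hK0 hKK bW11 bW12 bW21 bW22 bsn eQ H hE11 hE12 hE21 hE22 hS hS1 hS2 T1 T2
  hT11 hT12 hT21 hT22 oA1 oB1 oA2 oB2 hx1 hy1 hx2 hy2.
pose P := (2 + (KK + KK))%N.
have le : forall k, (k <= Q)%N -> forall x, qsm Q x -> qsm k x.
  by move=> k hk x; apply: qsm_le hk.
have hsn : in_pZ p 1 sn.
  case: hS => x [y [ox [oy [e1 e2]]]].
  have oS2 : Op S.2 by rewrite e2; apply: Op_add; apply: Op_mul => //; apply: O_Op.
  have oS1 : Op S.1 by rewrite e1.
  have hS1' : qsm (1 + K0) (qsub (e11 hh) S.1) by apply: qsm_le hS1; lia.
  have hS2' : qsm (1 + K0) (qsub (e12 hh) S.2) by apply: qsm_le hS2; lia.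
  have d1 : in_pZ p 1 (N (e11 hh) - N S.1).
    have := qapprox_mul (hK0 _ oS1) (qbd_conj (hK0 _ oS1)) hS1'
              (eq_ind _ (qsm _) (qsm_conj hS1') _ (qconjB _ _)).
    by case.
  have d2 : in_pZ p 1 (N (e12 hh) - N S.2).
    have := qapprox_mul (hK0 _ oS2) (qbd_conj (hK0 _ oS2)) hS2'
              (eq_ind _ (qsm _) (qsm_conj hS2') _ (qconjB _ _)).
    by case.
  have d3 : in_pZ p 1 (N (e11 hh) + N (e12 hh) - sn).
    have : qsm 1 (qsub (e11 H) (qscal sn)) by apply: qsm_le hE11; lia.
    case=> h0 _ _ _.
    by move: h0; rewrite /H; case: (hh) => h11 h12 h21 h22 /=.
  have q := QL ox oy; rewrite -e2 -e1 in q.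
  have -> : sn = (N S.1 + N S.2) + (N (e11 hh) - N S.1) + (N (e12 hh) - N S.2)
                 - (N (e11 hh) + N (e12 hh) - sn) by ring.
  by apply: pZ_sub => //; apply: pZ_add => //; apply: pZ_add.
have csub : forall k x y, qsm k (qsub x y) -> qsm k (qsub (qconj x) (qconj y)).
  by move=> k x y h; rewrite -qconjB; apply: qsm_conj.
have bapp : forall x A, Op A -> qsm Q (qsub x A) -> qbd KK x.
  move=> x A oA h; have -> : x = qadd (qsub x A) A by qring.
  by apply: qbd_add; [apply: qbd_sm h | apply: qbd_mono hKK (hK0 _ oA)].
have bA : forall A, Op A -> qbd KK A by move=> A oA; apply: qbd_mono hKK (hK0 _ oA).
have bW : forall x W, qbd KK W -> qsm Q (qsub W x) -> qbd KK x.
  move=> x W bw h; have -> : x = qadd (qsub x W) W by qring.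
  by apply: qbd_add => //; apply: qbd_sm (qsm_sym h).
have eQ' : Q = (P + KK + KK)%N by rewrite eQ.
rewrite eQ' in hE11 hE12 hE21 hE22 hx1 hy1 hx2 hy2.
have r2 : qsm P (qsub (Bf a b W1 W2) (Bf a b T1 T2)).
  rewrite /Bf qsubDD; apply: qsm_add; apply: qsm_sym;
  (apply: (qapprox_mul (K := KK)); [ done | by apply: qbd_conj | | ]);
  try (apply: qsm_sym; apply: qsm_le (_ : qsm Q _); [lia | done]);
  (apply: csub; apply: qsm_sym; apply: qsm_le (_ : qsm Q _); [lia | done]).
have bx1 := bapp _ _ oA1 (eq_ind _ (qsm ^~ _) hx1 _ (esym eQ')).
have bx2 := bapp _ _ oA2 (eq_ind _ (qsm ^~ _) hx2 _ (esym eQ')).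
have by1 := bapp _ _ oB1 (eq_ind _ (qsm ^~ _) hy1 _ (esym eQ')).
have by2 := bapp _ _ oB2 (eq_ind _ (qsm ^~ _) hy2 _ (esym eQ')).
pose U := qadd (qm x1 (qconj x2)) (qm y1 (qconj y2)).
have r4 : qsm P (qsub (Bf a b T1 T2) (qm (qscal sn) U)).
  rewrite /T1 /T2 Bexp -/H /U -qscal4 !qsubDD.
  by apply: qsm_add; apply: qsm_add; rewrite qm3B;
    (apply: (qsm_mull (K := KK)) => //; apply: (qsm_mulr (K := KK)) => //; apply: qbd_conj).
pose z := qadd (qm A1 (qconj A2)) (qm B1 (qconj B2)).
have oz : Op z by apply: Op_add; apply: Op_mul => //; apply: Op_conj.
have r5 : qsm P (qsub (qm (qscal sn) U) (qm (qscal sn) z)).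
  rewrite qmcB. apply: (qsm_mull (K := KK)). by apply: qbd_scal.
  rewrite /U /z qsubDD. apply: qsm_add.
    exact: (qapprox_mul (K := KK) (bA _ oA1) (qbd_conj (bA _ oA2)) hx1 (csub _ _ _ hx2)).
  exact: (qapprox_mul (K := KK) (bA _ oB1) (qbd_conj (bA _ oB2)) hy1 (csub _ _ _ hy2)).
pose r := qm lam (qconj mu).
have rW : r = Bf a b W1 W2.
  rewrite /r /Bf /W1 /W2 /gg /Dvmul /vmul /= -/(Dmul a b).
  by rewrite !qm1l !qm0l !qadd0l !qadd0r qconj_scal qm0r qadd0l.
pose R := qm (qscal sn) z.
have r6 : qsm P (qsub r R).
  rewrite rW; apply: qsm_trans r2 _; apply: qsm_trans r4 _; exact: r5.
have bR : qbd (KK + KK) R by apply: qbd_mul; [apply: qbd_scal | apply: bA].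
have r7 : in_pZ p 2 (N r - N R).
  by have [] := qapprox_mul bR (qbd_conj bR) r6 (csub _ _ _ r6).
have eNr : N r = (p%:R - 1) * p%:R.
  by rewrite /r NqM Nq_conj (@Nlam p a b lam hlam) (@Nmu p a b mu hmu).
have eNR : N R = sn ^+ 2 * N z by rewrite /R NqM Nq_scal.
have Nz := Op_N oz.
have h2 : in_pZ p (1 + 1) ((p ^ 1)%:R * (p%:R - 1)).
  have -> : (p ^ 1)%:R * (p%:R - 1) = (N r - N R) + sn * sn * N z.
    by rewrite eNR eNr expn1; ring.
  apply: pZ_add => //; apply: pZ_mul0r => //; exact: pZ_mul.
by apply: pZ_pm1; apply: (pZ_div (k := 1)).
Qed.
End Core.

End G.
Import G.

Module H.
Import Order.TTheory GRing.Theory Num.Theory.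
Local Open Scope ring_scope.
Set Implicit Arguments. Unset Strict Implicit. Unset Printing Implicit Defensive.

Definition ev (P : nat -> Prop) := exists M, forall n, (M <= n)%N -> P n.
Lemma ev_and (P Q : nat -> Prop) : ev P -> ev Q -> ev (fun n => P n /\ Q n).
Proof.
case=> M1 h1 [M2 h2]; exists (maxn M1 M2) => n hn; split.
  by apply: h1; apply: leq_trans hn; apply: leq_maxl.
by apply: h2; apply: leq_trans hn; apply: leq_maxr.
Qed.
Lemma ev_map (P Q : nat -> Prop) : ev P -> (forall n, P n -> Q n) -> ev Q.
Proof. by case=> M h f; exists M => n hn; apply: f; apply: h. Qed.

Section Fin.
Variable p : nat.
Hypothesis pp : prime p.
Variables a b : int.
Local Notation p_gt1 := (@p_gt1 p pp).
Local Notation p_gt0 := (@p_gt0 p pp).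
Local Notation pR0 := (@pR0 p pp).
Local Notation pXR0 := (@pXR0 p pp).
Local Notation rat_to_int := (@rat_to_int p pp).
Local Notation pint_den := (@pint_den p pp).
Local Notation den_pint := (@den_pint p pp).
Local Notation pZ_scale := (@pZ_scale p pp).
Local Notation pZ0 := (@pZ0 p pp).
Local Notation pZ_int := (@pZ_int p pp).
Local Notation pZ_nat := (@pZ_nat p pp).
Local Notation pZ_add := (@pZ_add p pp).
Local Notation pZ_opp := (@pZ_opp p pp).
Local Notation pZ_sub := (@pZ_sub p pp).
Local Notation pZ_mul := (@pZ_mul p pp).
Local Notation pZ_mul0 := (@pZ_mul0 p pp).
Local Notation pZ_mul0r := (@pZ_mul0r p pp).
Local Notation pZ_le := (@pZ_le p pp).
Local Notation pZ_p := (@pZ_p p pp).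
Local Notation pZ_pX := (@pZ_pX p pp).
Local Notation pZ_div := (@pZ_div p pp).
Local Notation pZ_invnat := (@pZ_invnat p pp).
Local Notation pZ_inv := (@pZ_inv p pp).
Local Notation pZ_zero_all := (@pZ_zero_all p pp).
Local Notation pZ_bnd := (@pZ_bnd p pp).
Local Notation pZ_powbnd := (@pZ_powbnd p pp).
Local Notation pZ_sq := (@pZ_sq p pp).
Local Notation pZ_pm1 := (@pZ_pm1 p pp).
Local Notation bnd_add := (@bnd_add p pp).
Local Notation bnd_opp := (@bnd_opp p pp).
Local Notation bnd_int := (@bnd_int p pp).
Local Notation bnd_mul := (@bnd_mul p pp).
Local Notation bnd_mono := (@bnd_mono p pp).
Local Notation bnd_pZ := (@bnd_pZ p pp).
Local Notation sm_mul := (@sm_mul p pp).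
Local Notation bnd0 := (@bnd0 p pp).
Local Notation bnd_const := (@bnd_const p pp).
Local Notation qall_add := (@qall_add p pp).
Local Notation qall_opp := (@qall_opp p pp).
Local Notation qall_conj := (@qall_conj p pp).
Local Notation qsm_add := (@qsm_add p pp).
Local Notation qsm_opp := (@qsm_opp p pp).
Local Notation qsm_sub := (@qsm_sub p pp).
Local Notation qsm_conj := (@qsm_conj p pp).
Local Notation qbd_add := (@qbd_add p pp).
Local Notation qbd_opp := (@qbd_opp p pp).
Local Notation qbd_sub := (@qbd_sub p pp).
Local Notation qbd_conj := (@qbd_conj p pp).
Local Notation qbd_mono := (@qbd_mono p pp).
Local Notation qbd_sm := (@qbd_sm p pp).
Local Notation qbd_scal := (@qbd_scal p pp).
Local Notation qsm_scal := (@qsm_scal p pp).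
Local Notation qbd_const := (@qbd_const p pp).
Local Notation qsm_le := (@qsm_le p pp).
Local Notation qsm_trans := (@qsm_trans p pp).
Local Notation qsm_refl := (@qsm_refl p pp).
Local Notation qsm_sym := (@qsm_sym p pp).
Local Notation qmul_gen := (@qmul_gen p pp a b).
Local Notation qbd_mul := (@qbd_mul p pp a b).
Local Notation qsm_mull := (@qsm_mull p pp a b).
Local Notation qsm_mulr := (@qsm_mulr p pp a b).
Local Notation qm_diff := (@qm_diff p pp a b).
Local Notation qapprox_mul := (@qapprox_mul p pp a b).
Local Notation bnd := (@bnd p).
Local Notation qbd := (@qbd p).
Local Notation qsm := (@qsm p).

Variable O : quat rat -> Prop.
Hypothesis hO : is_order a b O.
Variables lam mu : quat rat.
Hypothesis Olam : O lam.
Hypothesis Omu : O mu.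
Hypothesis hlam : Dmul a b lam (qconj lam) = qscal (p%:R - 1).
Hypothesis hmu : Dmul a b mu (qconj mu) = qscal p%:R.
Hypothesis hr : ramified_at a b p.
Local Notation qm := (Dmul a b).
Local Notation Op := (@Op p O).
Local Notation Lp := (@Lp p a b O lam mu).
Local Notation L := (O2g a b O (gg lam mu)).

Lemma qequiv_ev X Y : qequiv p X Y -> forall K, ev (fun n => qsm K (qsub (X n) (Y n))).
Proof using.
case=> h0 h1 h2 h3 K.
have f0 : ev (fun n => in_pZ p K (q0 (qsub (X n) (Y n)))) := h0 K.
have f1 : ev (fun n => in_pZ p K (q1 (qsub (X n) (Y n)))) := h1 K.
have f2 : ev (fun n => in_pZ p K (q2 (qsub (X n) (Y n)))) := h2 K.
have f3 : ev (fun n => in_pZ p K (q3 (qsub (X n) (Y n)))) := h3 K.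
apply: ev_map (ev_and f0 (ev_and f1 (ev_and f2 f3))) _.
by move=> n [? [? [? ?]]]; split.
Qed.

Lemma qequiv_eq X Y : (forall n, X n = Y n) -> qequiv p X Y.
Proof using pp.
move=> e; split=> K; exists 0%N => n _; rewrite /= (e n) /= subrr; exact: pZ0.
Qed.

Lemma qcauchy_const w : qcauchy p (fun _ => w).
Proof using pp. by split; apply: (@rc_const p pp). Qed.

Lemma isZl1 : isZl p (fun _ => 1).
Proof using pp. by split; [apply: (@rc_const p pp) | move=> _; exact: (pZ_nat 1)]. Qed.

Lemma in_Ol1 : in_Ol p O (fun _ => qscal 1).
Proof using pp hO.
exists 1%N, (fun _ _ => 1), (fun _ => qscal 1); split.
  by move=> i _; split; [exact: isZl1 | exact: (O1 hO)].
by apply: qequiv_eq => n; rewrite /qsumk /=; qring.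
Qed.

Lemma in_Ol0 : in_Ol p O (fun _ => qscal 0).
Proof using pp.
exists 0%N, (fun _ _ => 1), (fun _ => qscal 1); split => //.
by apply: qequiv_eq.
Qed.

Lemma in_Ol_ev X : in_Ol p O X -> forall K, ev (fun n => exists A, Op A /\ qsm K (qsub (X n) A)).
Proof using pp hO.
case=> k [c [w [hcw he]]] K.
case: (qequiv_ev he K) => M hM; exists M => n /hM h.
exists (qsumk k (fun i => qscale (c i n) (w i))); split => //.
apply: (@Op_sum p pp a b O hO) => i hi; have [[_ hc] hw] := hcw i hi; split => //.
Qed.

Lemma in_Ll_ev V : in_Ll p L V -> forall K,
  ev (fun n => exists S, Lp S /\ qsm K (qsub (V n).1 S.1) /\ qsm K (qsub (V n).2 S.2)).
Proof using pp hO.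
case=> k [c [w [hcw [he1 he2]]]] K.
case: (ev_and (qequiv_ev he1 K) (qequiv_ev he2 K)) => M hM; exists M => n /hM [h1 h2].
exists (qsumk k (fun i => qscale (c i n) (w i).1), qsumk k (fun i => qscale (c i n) (w i).2)).
split => //.
apply: (@Lp_sum p pp a b O hO lam mu) => i hi; have [[_ hc] hw] := hcw i hi; split => //.
Qed.

Lemma in_Ll_const w : L w -> in_Ll p L (fun _ => w).
Proof using pp.
move=> hw; exists 1%N, (fun _ _ => 1), (fun _ => w); split.
  by move=> i _; split; [exact: isZl1 | done].
by split; apply: qequiv_eq => n; rewrite /qsumk /=; qring.
Qed.

Lemma rc_bnd c : rcauchy p c -> exists K, ev (fun n => bnd K (c n)).
Proof using pp.
move=> h; case: (h 0%N) => M hM; case: (bnd_const (c M)) => K hK.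
exists K, M => n hn; have -> : c n = (c n - c M) + c M by ring.
apply: bnd_add => //; apply: bnd_pZ; exact: hM.
Qed.

Lemma nonprinc : nonprincipal_genus a b p O L.
Proof using pp hO Olam Omu hlam hmu hr.
move=> [h [[hc [s [[rcs _] hE]]] hiff]].
case: hc => c11 c12 c21 c22.
case: hE => E11 E12 E21 E22.
pose V n := (e11 (h n), e12 (h n)).
have hVc : vcauchy p V by split.
have hVo : in_Ol2h a b p O h V.
  exists (fun _ => qscal 1), (fun _ => qscal 0); split; first exact: in_Ol1.
  split; first exact: in_Ol0.
  split; apply: qequiv_eq => n; rewrite /V /Dvmul /vmul /= -/(Dmul a b);
    by rewrite qm1l qm0l qadd0r.
have hVl := (hiff V hVc).2 hVo.
have LW1 : L (W1 a b lam mu).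
  by exists (qscal 1), (qscal 0); split; [exact: (O1 hO) | split; [exact: (O0 hO) | ]].
have LW2 : L (W2 a b lam mu).
  by exists (qscal 0), (qscal 1); split; [exact: (O0 hO) | split; [exact: (O1 hO) | ]].
have vc : forall w, vcauchy p (fun _ => w) by move=> w; split; apply: qcauchy_const.
have [X1 [Y1 [hX1 [hY1 [hT11 hT12]]]]] := (hiff _ (vc _)).1 (in_Ll_const LW1).
have [X2 [Y2 [hX2 [hY2 [hT21 hT22]]]]] := (hiff _ (vc _)).1 (in_Ll_const LW2).
have [K0 hK0] := @Op_bnd p pp a b O hO.
have [K1 hK1] := qbd_const (W1 a b lam mu).1.
have [K2 hK2] := qbd_const (W1 a b lam mu).2.
have [K3 hK3] := qbd_const (W2 a b lam mu).1.
have [K4 hK4] := qbd_const (W2 a b lam mu).2.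
have [Ks hs] := rc_bnd rcs.
pose KK := (K0 + K1 + K2 + K3 + K4 + Ks)%N.
pose Q := (2 + (KK + KK) + KK + KK)%N.
have [M hM] := ev_and (qequiv_ev E11 Q) (ev_and (qequiv_ev E12 Q) (ev_and (qequiv_ev E21 Q)
  (ev_and (qequiv_ev E22 Q) (ev_and (in_Ll_ev hVl Q) (ev_and (qequiv_ev hT11 Q)
  (ev_and (qequiv_ev hT12 Q) (ev_and (qequiv_ev hT21 Q) (ev_and (qequiv_ev hT22 Q)
  (ev_and (in_Ol_ev hX1 Q) (ev_and (in_Ol_ev hY1 Q) (ev_and (in_Ol_ev hX2 Q)
  (ev_and (in_Ol_ev hY2 Q) hs)))))))))))).
have [e11 [e12 [e21 [e22 [[S [hS [hS1 hS2]]] [t11 [t12 [t21 [t22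
  [[A1 [oA1 a1]] [[B1 [oB1 b1]] [[A2 [oA2 a2]] [[B2 [oB2 b2]] hsM]]]]]]]]]]]]] := hM M (leqnn M).
apply: (@core p pp a b O hO lam mu Olam Omu hlam hmu hr (h M) (s M) (X1 M) (Y1 M) (X2 M) (Y2 M)
   A1 B1 A2 B2 S K0 KK Q hK0) => //; rewrite /KK.
- lia.
- by apply: qbd_mono hK1; lia.
- by apply: qbd_mono hK2; lia.
- by apply: qbd_mono hK3; lia.
- by apply: qbd_mono hK4; lia.
- by apply: bnd_mono hsM; lia.
Qed.

End Fin.

End H.
Import H.

Module Ieasy.
Import Order.TTheory GRing.Theory Num.Theory.
Local Open Scope ring_scope.
Set Implicit Arguments. Unset Strict Implicit. Unset Printing Implicit Defensive.

Section Easy.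
Variables a b : int.
Local Notation qm := (Dmul a b).
Implicit Types x y z : quat rat.
Lemma qaddC x y : qadd x y = qadd y x. Proof. qring. Qed.
Lemma qconjK x : qconj (qconj x) = x. Proof. qring. Qed.
Lemma qmscal (c d : rat) : qm (qscal c) (qscal d) = qscal (c * d). Proof. qring. Qed.
Lemma qmscalC x (c : rat) : qm x (qscal c) = qm (qscal c) x. Proof. qring. Qed.
Lemma tr0 r (c : rat) : qadd r (qconj r) = qscal 0 ->
  qadd (qm (qconj r) (qscal c)) (qconj (qm (qconj r) (qscal c))) = qscal 0.
Proof.
move=> h; have h0 : q0 r + q0 r = 0 by move/(congr1 (@q0 rat)): h; rewrite /qadd /qconj /=.
apply: quatE; qunf; try ring.
transitivity (c * (q0 r + q0 r)); first ring.
by rewrite h0 mulr0.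
Qed.
End Easy.

Theorem easy (p : nat) (a b : int) (lam mu : quat rat) :
  prime p ->
  Dmul a b mu (qconj mu) = qscal p%:R ->
  let r := Dmul a b lam (qconj mu) in
  qadd r (qconj r) = qscal 0 ->
  let g := M2 (qscal 1) lam (qscal 0) mu in
  let P := M2 (qscal 1) (Dmul a b (qconj r) (qscal (p%:R)^-1)) (qscal 0) (qscal 1) in
  let A := Dmmul a b g (mconjT g) in
  is_diag (Dmmul a b (Dmmul a b P A) (mconjT P))
    /\ (Dmmul a b P (mconj P) = mscal 1 /\ Dmmul a b (mconj P) P = mscal 1).
Proof.
move=> pp hmu r hr g P A.
have p0 : (p%:R : rat) != 0 by rewrite pnatr_eq0 -lt0n prime_gt0.
have hs := @tr0 a b r (p%:R^-1) hr.
rewrite /A /P /g /Dmmul /mmul /mconjT /mtr /mconj /is_diag /mscal /= -/(Dmul a b).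
rewrite !qconj_scal !qm1l !qm1r !qm0l !qm0r !qadd0l !qadd0r.
have cr : qconj r = Dmul a b mu (qconj lam) by rewrite /r qconjM qconjK.
split; [split|split].
- rewrite hmu -DmA qmscal mulVf // qm1r -/r; exact: hr.
- rewrite hmu qconjM qconj_scal qconjK DmA qmscal mulfV // qm1l -cr qaddC; exact: hr.
- by rewrite qaddC hs.
- by rewrite hs.
Qed.


End Ieasy.
Import Ieasy.

Theorem lemma5p5 (p : nat) (a b : int) (O : quat rat -> Prop)
    (lam mu : quat rat) :
  prime p ->
  ramified_exactly_at_p_infty a b p ->
  is_maximal_order a b O ->
  O lam -> O mu ->
  Dmul a b lam (qconj lam) = qscal (p%:R - 1) ->
  Dmul a b mu (qconj mu) = qscal p%:R ->
  let r := Dmul a b lam (qconj mu) in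
  qadd r (qconj r) = qscal 0 ->
  let g := M2 (qscal 1) lam (qscal 0) mu in
  let P := M2 (qscal 1) (Dmul a b (qconj r) (qscal (p%:R)^-1)) (qscal 0) (qscal 1) in
  let A := Dmmul a b g (mconjT g) in
  [/\ nonprincipal_genus a b p O (O2g a b O g),
      is_diag (Dmmul a b (Dmmul a b P A) (mconjT P))
    & Dmmul a b P (mconj P) = mscal 1 /\ Dmmul a b (mconj P) P = mscal 1].
Proof.
move=> pp hram hmax Olam Omu hlam hmu r hr g P A.
have hO : is_order a b O by case: hmax.
have hrp : ramified_at a b p by case: hram => _ h; apply/(h p pp).
have [hd hinv] := @easy p a b lam mu pp hmu hr.
split => //.
exact: (@nonprinc p pp a b O hO lam mu Olam Omu hlam hmu hrp).
Qed.
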